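(* Let $U\subset\mathbb{R}^2$ be open and let $f=u+iv$ be a holomorphic function of $\xi+i\eta$ on $U$ ($u,v$ real). Then the function $$F(x)=u(x_0,|\vec x|)+\frac{\vec x}{|\vec x|}\,v(x_0,|\vec x|),$$ defined for paravectors $x=x_0+\vec x$ with $\vec x\neq0$ and $(x_0,|\vec x|)\in U$, is holomorphic Cliffordian.
   Context: $\mathbb{R}_{0,3}$ is the real Clifford algebra generated by $e_1,e_2,e_3$ with $e_ie_j+e_je_i=-2\delta_{ij}$; $e_0=1$. A paravector is $x=x_0+\vec x$ with $\vec x=x_1e_1+x_2e_2+x_3e_3$, $|\vec x|=(x_1^2+x_2^2+x_3^2)^{1/2}$; paravectors are identified with $\mathbb{R}^4$. With $D=\sum_{i=0}^3 e_i\partial/\partial x_i$ and $\Delta=\sum_{i=0}^3\partial^2/\partial x_i^2$, a function is holomorphic Cliffordian if $D\Delta F=0$. *)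

(* Defs.v *)
From Stdlib Require Import Reals List.
From Coquelicot Require Import Coquelicot.
Open Scope R_scope.

(** * The Clifford algebra R_{0,3}
    An element is given by its 8 real coordinates on the basis blades
    e_1^{a1} e_2^{a2} e_3^{a3} (a1,a2,a3 booleans); e.g. the blade
    (false,false,false) is e_0 = 1, (true,false,false) is e_1,
    (true,true,false) is e_1 e_2, ... *)
Definition Cl := bool -> bool -> bool -> R.

Definition b2R (b : bool) : R := if b then 1 else 0.
Definition sumb (g : bool -> R) : R := g true + g false.

(* sign of e_A e_B = sign * e_{A xor B}, using e_i e_j = - e_j e_i (i<>j)
   and e_i^2 = -1 : exponent = (#transpositions) + |A cap B| *)
Definition nb (b : bool) : nat := if b then 1%nat else 0%nat.
Definition blade_sign (a1 a2 a3 b1 b2 b3 : bool) : R :=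
  (-1) ^ (nb a2 * nb b1 + nb a3 * nb b1 + nb a3 * nb b2
          + nb a1 * nb b1 + nb a2 * nb b2 + nb a3 * nb b3).

Definition cl_add (x y : Cl) : Cl := fun c1 c2 c3 => x c1 c2 c3 + y c1 c2 c3.
Definition cl_zero : Cl := fun _ _ _ => 0.

Definition cl_mul (x y : Cl) : Cl := fun c1 c2 c3 =>
  sumb (fun a1 => sumb (fun a2 => sumb (fun a3 =>
    blade_sign a1 a2 a3 (xorb a1 c1) (xorb a2 c2) (xorb a3 c3)
    * x a1 a2 a3 * y (xorb a1 c1) (xorb a2 c2) (xorb a3 c3)))).

Definition blade (a1 a2 a3 : bool) : Cl := fun c1 c2 c3 =>
  if andb (andb (Bool.eqb a1 c1) (Bool.eqb a2 c2)) (Bool.eqb a3 c3) then 1 else 0.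

Definition gen (k : nat) : Cl :=
  match k with
  | 0 => blade false false false
  | 1 => blade true false false
  | 2 => blade false true false
  | _ => blade false false true
  end.

Definition para (a0 a1 a2 a3 : R) : Cl := fun c1 c2 c3 =>
  match c1, c2, c3 with
  | false, false, false => a0
  | true, false, false => a1
  | false, true, false => a2
  | false, false, true => a3
  | _, _, _ => 0
  end.

Definition R4 := (R * R * R * R)%type.

Definition coord (x : R4) (k : nat) : R :=
  let '(a, b, c, d) := x in
  match k with 0 => a | 1 => b | 2 => c | _ => d end.

Definition setc (x : R4) (k : nat) (t : R) : R4 :=
  let '(a, b, c, d) := x in
  match k with
  | 0 => (t, b, c, d) | 1 => (a, t, c, d) | 2 => (a, b, t, d) | _ => (a, b, c, t)
  end.

Definition vnorm (x : R4) : R :=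
  sqrt (coord x 1 ^ 2 + coord x 2 ^ 2 + coord x 3 ^ 2).

Definition pd (k : nat) (g : R4 -> R) (x : R4) : R :=
  Derive (fun t => g (setc x k t)) (coord x k).

Definition iter_pd (ks : list nat) (g : R4 -> R) : R4 -> R :=
  fold_right pd g ks.

Definition smooth_on (Om : R4 -> Prop) (g : R4 -> R) : Prop :=
  forall (ks : list nat) (x : R4), Om x ->
    continuous (iter_pd ks g) x /\
    forall k, (k < 4)%nat -> ex_derive (fun t => iter_pd ks g (setc x k t)) (coord x k).

Definition pdC (k : nat) (G : R4 -> Cl) (x : R4) : Cl :=
  fun c1 c2 c3 => pd k (fun y => G y c1 c2 c3) x.

Definition Lap (G : R4 -> Cl) (x : R4) : Cl :=
  cl_add (pdC 0 (pdC 0 G) x) (cl_add (pdC 1 (pdC 1 G) x)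
    (cl_add (pdC 2 (pdC 2 G) x) (pdC 3 (pdC 3 G) x))).

Definition Dop (G : R4 -> Cl) (x : R4) : Cl :=
  cl_add (cl_mul (gen 0) (pdC 0 G x)) (cl_add (cl_mul (gen 1) (pdC 1 G x))
    (cl_add (cl_mul (gen 2) (pdC 2 G x)) (cl_mul (gen 3) (pdC 3 G x)))).

Definition holomorphic_cliffordian (Om : R4 -> Prop) (F : R4 -> Cl) : Prop :=
  (forall c1 c2 c3, smooth_on Om (fun x => F x c1 c2 c3)) /\
  forall x, Om x -> Dop (Lap F) x = cl_zero.

Definition holomorphic_on (U : C -> Prop) (f : C -> C) : Prop :=
  forall z, U z -> ex_derive (K := C_AbsRing) (V := C_NormedModule) f z.

(* Main.v *)
Require Import Defs.
From Stdlib Require Import Reals Lra ClassicalEpsilon ZArith List FunctionalExtensionality.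
From Coquelicot Require Import Coquelicot.
Open Scope R_scope.

Lemma Cmod_fst (z : C) : Rabs (fst z) <= Cmod z.
Proof. apply re_le_Cmod. Qed.

Lemma Cmod_snd (z : C) : Rabs (snd z) <= Cmod z.
Proof.
  unfold Cmod. rewrite <- sqrt_Rsqr_abs. apply sqrt_le_1_alt.
  unfold Rsqr. simpl. nra.
Qed.

Lemma Cmod_le_sum (z : C) : Cmod z <= Rabs (fst z) + Rabs (snd z).
Proof.
  unfold Cmod. rewrite <- (sqrt_Rsqr (Rabs (fst z) + Rabs (snd z))).
  2:{ pose proof (Rabs_pos (fst z)); pose proof (Rabs_pos (snd z)); lra. }
  apply sqrt_le_1_alt. unfold Rsqr. simpl.
  pose proof (Rabs_pos (fst z)); pose proof (Rabs_pos (snd z)).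
  assert (E1 := pow2_abs (fst z)). assert (E2 := pow2_abs (snd z)). simpl in E1, E2. nra.
Qed.

Lemma Cmod_pair (x y : R) : Cmod (x, y) = sqrt (x*x + y*y).
Proof. unfold Cmod; simpl; f_equal; ring. Qed.

Lemma Cmod_sub_sym (a b : C) : Cmod (a - b) = Cmod (b - a).
Proof. rewrite <- Cmod_opp. f_equal. ring. Qed.

Lemma Cmod_triangle_sub (a b : C) : Cmod (a - b) <= Cmod a + Cmod b.
Proof. unfold Cminus. rewrite <- (Cmod_opp b). apply Cmod_triangle. Qed.

Lemma Cmod_rev_tri (a b : C) : Cmod a - Cmod b <= Cmod (a - b).
Proof.
  assert (H := Cmod_triangle (a - b) b).
  replace (a - b + b)%C with a in H by ring. lra.
Qed.

Lemma Cmod_hline (s t y : R) : Cmod ((s, y) - (t, y))%C = Rabs (s - t).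
Proof.
  rewrite <- Cmod_R. f_equal. unfold Cminus, Cplus, Copp, RtoC; simpl.
  f_equal; ring.
Qed.

Lemma Cmod_vline (s t x : R) : Cmod ((x, s) - (x, t))%C = Rabs (s - t).
Proof.
  rewrite <- (Cmod_R (s - t)). rewrite <- (Rmult_1_l (Cmod (RtoC (s - t)))).
  rewrite <- Cmod_Ci, <- Cmod_mult.
  f_equal. unfold Cminus, Cplus, Copp, RtoC, Cmult, Ci; simpl.
  f_equal; ring.
Qed.

Lemma Cmod_pos_lt (z : C) : z <> (RtoC 0) -> 0 < Cmod z.
Proof. intro H. apply Cmod_gt_0. exact H. Qed.

Lemma Cmod_small_ne (a h : C) : Cmod h < Cmod a -> (a - h)%C <> (RtoC 0).
Proof.
  intros H E. assert (a = h). { apply (f_equal (fun w => w + h)%C) in E.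
  replace (a - h + h)%C with a in E by ring. rewrite E. ring. }
  subst. lra.
Qed.

Lemma Cmod_small_ne' (a h : C) : Cmod h < Cmod a -> (a + h)%C <> (RtoC 0).
Proof.
  intros H. replace (a + h)%C with (a - - h)%C by ring. apply Cmod_small_ne.
  rewrite Cmod_opp; exact H.
Qed.

Lemma Cmod_lower (a h : C) : Cmod (a - h) >= Cmod a - Cmod h.
Proof. pose proof (Cmod_rev_tri a h). lra. Qed.

Lemma Cmod_lower' (a h : C) : Cmod (a + h) >= Cmod a - Cmod h.
Proof. replace (a + h)%C with (a - - h)%C by ring. rewrite <- (Cmod_opp h). apply Cmod_lower. Qed.

Lemma pair_eq (a b c d : R) : a = c -> b = d -> (a, b) = (c, d).
Proof. intros; subst; auto. Qed.

Lemma C_ext (z w : C) : fst z = fst w -> snd z = snd w -> z = w.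
Proof. destruct z, w; simpl; intros; subst; auto. Qed.

Definition cd (g : C -> C) (z l : C) : Prop :=
  forall eps, 0 < eps -> exists del, 0 < del /\
    forall h, Cmod h < del -> Cmod (g (z + h) - g z - l * h)%C <= eps * Cmod h.

Definition ccont (g : C -> C) (z : C) : Prop :=
  forall eps, 0 < eps -> exists del, 0 < del /\
    forall w, Cmod (w - z) < del -> Cmod (g w - g z) < eps.

Lemma cd_quad (g : C -> C) (z l : C) (K d0 : R) : 0 < d0 ->
  (forall h, Cmod h < d0 -> Cmod (g (z + h) - g z - l * h)%C <= K * (Cmod h * Cmod h)) ->
  cd g z l.
Proof.
  intros Hd0 H eps Heps.
  set (K' := Rabs K + 1).
  assert (HK' : 0 < K') by (unfold K'; pose proof (Rabs_pos K); lra).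
  exists (Rmin d0 (eps / K')). split.
  { apply Rmin_glb_lt; auto. apply Rdiv_lt_0_compat; auto. }
  intros h Hh.
  assert (H1 : Cmod h < d0) by (eapply Rlt_le_trans; [exact Hh| apply Rmin_l]).
  assert (H2 : Cmod h < eps / K') by (eapply Rlt_le_trans; [exact Hh| apply Rmin_r]).
  eapply Rle_trans. apply H; auto.
  pose proof (Cmod_ge_0 h).
  assert (K <= K') by (unfold K'; pose proof (Rle_abs K); lra).
  assert (Cmod h * K' <= eps).
  { apply Rlt_le. apply (Rmult_lt_compat_r K') in H2; auto.
    unfold Rdiv in H2. rewrite Rmult_assoc, Rinv_l in H2; lra. }
  nra.
Qed.

Lemma cd_ccont (g : C -> C) (z l : C) : cd g z l -> ccont g z.
Proof.
  intros H eps Heps.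
  destruct (H 1 Rlt_0_1) as [d [Hd Hg]].
  set (M := Cmod l + 1).
  assert (HM : 0 < M) by (unfold M; pose proof (Cmod_ge_0 l); lra).
  exists (Rmin d (eps / M)). split.
  { apply Rmin_glb_lt; auto. apply Rdiv_lt_0_compat; auto. }
  intros w Hw.
  assert (H1 : Cmod (w - z) < d) by (eapply Rlt_le_trans; [exact Hw| apply Rmin_l]).
  assert (H2 : Cmod (w - z) < eps / M) by (eapply Rlt_le_trans; [exact Hw| apply Rmin_r]).
  specialize (Hg _ H1). replace (z + (w - z))%C with w in Hg by ring.
  assert (E : (g w - g z)%C = ((g w - g z - l * (w - z)) + l * (w - z))%C) by ring.
  rewrite E. eapply Rle_lt_trans. apply Cmod_triangle. rewrite Cmod_mult.
  assert (Cmod (w - z) * M < eps).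
  { apply (Rmult_lt_compat_r M) in H2; auto.
    unfold Rdiv in H2. rewrite Rmult_assoc, Rinv_l in H2; lra. }
  unfold M in *. pose proof (Cmod_ge_0 (w - z)). nra.
Qed.

Lemma cd_ext (g1 g2 : C -> C) (z l : C) (r : R) : 0 < r ->
  (forall w, Cmod (w - z) < r -> g1 w = g2 w) -> cd g1 z l -> cd g2 z l.
Proof.
  intros Hr E H eps Heps. destruct (H eps Heps) as [d [Hd Hg]].
  exists (Rmin d r). split. apply Rmin_glb_lt; auto.
  intros h Hh.
  assert (H1 : Cmod h < d) by (eapply Rlt_le_trans; [exact Hh| apply Rmin_l]).
  assert (H2 : Cmod h < r) by (eapply Rlt_le_trans; [exact Hh| apply Rmin_r]).
  rewrite <- !E. apply Hg; auto.
  - replace (z - z)%C with (RtoC 0) by ring. rewrite Cmod_0. lra.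
  - replace (z + h - z)%C with h by ring. auto.
Qed.

Lemma cd_unique (g : C -> C) (z l1 l2 : C) : cd g z l1 -> cd g z l2 -> l1 = l2.
Proof.
  intros H1 H2.
  assert (Hm : Cmod (l1 - l2) = 0).
  { apply Rle_antisym; [|apply Cmod_ge_0].
    apply Rnot_lt_le. intro Hp.
    set (e := Cmod (l1 - l2) / 4).
    assert (He : 0 < e) by (unfold e; lra).
    destruct (H1 e He) as [d1 [Hd1 G1]]. destruct (H2 e He) as [d2 [Hd2 G2]].
    set (t := Rmin d1 d2 / 2).
    assert (Ht : 0 < t) by (unfold t; apply Rdiv_lt_0_compat; [apply Rmin_glb_lt|]; lra).
    assert (Htm : Cmod (RtoC t) = t) by (rewrite Cmod_R; apply Rabs_right; lra).
    assert (Ht1 : t < d1) by (unfold t; pose proof (Rmin_l d1 d2); lra).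
    assert (Ht2 : t < d2) by (unfold t; pose proof (Rmin_r d1 d2); lra).
    specialize (G1 (RtoC t)). specialize (G2 (RtoC t)).
    rewrite Htm in G1, G2. specialize (G1 Ht1). specialize (G2 Ht2).
    assert (E : ((l1 - l2) * t)%C = ((g (z + t) - g z - l2 * t) - (g (z + t) - g z - l1 * t))%C) by ring.
    assert (Hb : Cmod ((l1 - l2) * t)%C <= 2 * e * t).
    { rewrite E. eapply Rle_trans. apply Cmod_triangle_sub. lra. }
    rewrite Cmod_mult, Htm in Hb. unfold e in Hb. nra. }
  apply Cmod_eq_0 in Hm. apply (f_equal (fun w => w + l2)%C) in Hm.
  replace (l1 - l2 + l2)%C with l1 in Hm by ring. rewrite Hm. ring.
Qed.

Lemma cd_plus (f g : C -> C) z lf lg : cd f z lf -> cd g z lg ->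
  cd (fun w => f w + g w)%C z (lf + lg)%C.
Proof.
  intros Hf Hg eps Heps.
  destruct (Hf (eps/2)) as [d1 [Hd1 G1]]; [lra|].
  destruct (Hg (eps/2)) as [d2 [Hd2 G2]]; [lra|].
  exists (Rmin d1 d2); split; [apply Rmin_glb_lt; auto|].
  intros h Hh.
  assert (H1 : Cmod h < d1) by (eapply Rlt_le_trans; [exact Hh| apply Rmin_l]).
  assert (H2 : Cmod h < d2) by (eapply Rlt_le_trans; [exact Hh| apply Rmin_r]).
  replace (f (z + h) + g (z + h) - (f z + g z) - (lf + lg) * h)%C
    with ((f (z + h) - f z - lf * h) + (g (z + h) - g z - lg * h))%C by ring.
  eapply Rle_trans. apply Cmod_triangle.
  specialize (G1 h H1). specialize (G2 h H2). lra.
Qed.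

Lemma cd_scal (c : C) (f : C -> C) z l : cd f z l -> cd (fun w => c * f w)%C z (c * l)%C.
Proof.
  intros Hf eps Heps.
  destruct (Hf (eps / (Cmod c + 1))) as [d [Hd G]].
  { apply Rdiv_lt_0_compat; auto. pose proof (Cmod_ge_0 c); lra. }
  exists d; split; auto. intros h Hh.
  replace (c * f (z + h) - c * f z - c * l * h)%C with (c * (f (z + h) - f z - l * h))%C by ring.
  rewrite Cmod_mult. specialize (G h Hh).
  pose proof (Cmod_ge_0 c). pose proof (Cmod_ge_0 h).
  pose proof (Cmod_ge_0 (f (z + h) - f z - l * h)%C).
  assert (Cmod c * (eps / (Cmod c + 1)) <= eps).
  { unfold Rdiv. rewrite <- Rmult_assoc.
    apply (Rmult_le_reg_r (Cmod c + 1)); [lra|].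
    rewrite Rmult_assoc, Rinv_l; lra. }
  apply Rle_trans with (Cmod c * (eps / (Cmod c + 1) * Cmod h)).
  apply Rmult_le_compat_l; auto. nra.
Qed.

Lemma cd_opp (f : C -> C) z l : cd f z l -> cd (fun w => - f w)%C z (- l)%C.
Proof.
  intros H. assert (H' := cd_scal (RtoC (-1)) f z l H).
  intros eps Heps. destruct (H' eps Heps) as [d [Hd G]]. exists d; split; auto.
  intros h Hh. specialize (G h Hh).
  replace (- f (z + h) - - f z - - l * h)%C with (-1 * f (z + h) - -1 * f z - -1 * l * h)%C by ring.
  auto.
Qed.

Lemma cd_minus (f g : C -> C) z lf lg : cd f z lf -> cd g z lg ->
  cd (fun w => f w - g w)%C z (lf - lg)%C.
Proof.
  intros Hf Hg. apply (cd_plus f (fun w => - g w)%C z lf (- lg)%C Hf).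
  apply cd_opp; auto.
Qed.

Lemma cd_const (c z : C) : cd (fun _ => c) z (RtoC 0).
Proof.
  apply (cd_quad _ _ _ 0 1); [lra|]. intros h _.
  replace (c - c - 0 * h)%C with (RtoC 0) by ring. rewrite Cmod_0. lra.
Qed.

Lemma cd_id (z : C) : cd (fun w => w) z (RtoC 1).
Proof.
  apply (cd_quad _ _ _ 0 1); [lra|]. intros h _.
  replace (z + h - z - 1 * h)%C with (RtoC 0) by ring. rewrite Cmod_0. lra.
Qed.

Lemma ccont_bound (g : C -> C) (z : C) : ccont g z ->
  exists d, 0 < d /\ forall w, Cmod (w - z) < d -> Cmod (g w) <= Cmod (g z) + 1.
Proof.
  intros H. destruct (H 1 Rlt_0_1) as [d [Hd G]]. exists d; split; auto.
  intros w Hw. specialize (G w Hw).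
  replace (g w) with ((g w - g z) + g z)%C by ring.
  eapply Rle_trans. apply Cmod_triangle. lra.
Qed.

Lemma cd_mult (f g : C -> C) z lf lg : cd f z lf -> cd g z lg ->
  cd (fun w => f w * g w)%C z (lf * g z + f z * lg)%C.
Proof.
  intros Hf Hg eps Heps.
  assert (Cf := cd_ccont _ _ _ Hf).
  set (A := Cmod (f z) + 2). set (B := Cmod (g z) + 1). set (L := Cmod lg + 1).
  assert (HA : 0 < A) by (unfold A; pose proof (Cmod_ge_0 (f z)); lra).
  assert (HB : 0 < B) by (unfold B; pose proof (Cmod_ge_0 (g z)); lra).
  assert (HL : 0 < L) by (unfold L; pose proof (Cmod_ge_0 lg); lra).
  destruct (Hg (eps / (3 * A))) as [d1 [Hd1 G1]]. { apply Rdiv_lt_0_compat; lra. }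
  destruct (Hf (eps / (3 * B))) as [d2 [Hd2 G2]]. { apply Rdiv_lt_0_compat; lra. }
  destruct (Cf (Rmin 1 (eps / (3 * L)))) as [d3 [Hd3 G3]].
  { apply Rmin_glb_lt; [lra|]. apply Rdiv_lt_0_compat; lra. }
  exists (Rmin d1 (Rmin d2 d3)). split. { repeat apply Rmin_glb_lt; auto. }
  intros h Hh.
  assert (H1 : Cmod h < d1) by (eapply Rlt_le_trans; [exact Hh| apply Rmin_l]).
  assert (H2 : Cmod h < d2) by (eapply Rlt_le_trans; [exact Hh| eapply Rle_trans; [apply Rmin_r| apply Rmin_l]]).
  assert (H3 : Cmod h < d3) by (eapply Rlt_le_trans; [exact Hh| eapply Rle_trans; [apply Rmin_r| apply Rmin_r]]).
  specialize (G1 h H1). specialize (G2 h H2).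
  assert (G3' : Cmod (f (z + h)%C - f z) < Rmin 1 (eps / (3 * L))).
  { apply G3. replace (z + h - z)%C with h by ring. auto. }
  assert (G3a : Cmod (f (z + h)%C - f z) < 1) by (eapply Rlt_le_trans; [exact G3'|apply Rmin_l]).
  assert (G3b : Cmod (f (z + h)%C - f z) < eps / (3 * L)) by (eapply Rlt_le_trans; [exact G3'|apply Rmin_r]).
  assert (Hfzh : Cmod (f (z + h)%C) <= A).
  { replace (f (z + h)%C) with ((f (z + h)%C - f z) + f z)%C by ring.
    eapply Rle_trans. apply Cmod_triangle. unfold A; lra. }
  replace (f (z + h)%C * g (z + h)%C - f z * g z - (lf * g z + f z * lg) * h)%C
    with (f (z + h)%C * (g (z + h)%C - g z - lg * h) + (f (z + h)%C - f z) * (lg * h)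
          + g z * (f (z + h)%C - f z - lf * h))%C by ring.
  pose proof (Cmod_ge_0 h).
  eapply Rle_trans. apply Cmod_triangle.
  eapply Rle_trans. apply Rplus_le_compat_r. apply Cmod_triangle.
  rewrite !Cmod_mult.
  assert (T1 : Cmod (f (z + h)%C) * Cmod (g (z + h)%C - g z - lg * h) <= eps / 3 * Cmod h).
  { apply Rle_trans with (A * (eps / (3 * A) * Cmod h)).
    apply Rmult_le_compat; try apply Cmod_ge_0; auto.
    right. field. lra. }
  assert (T2 : Cmod (f (z + h)%C - f z) * (Cmod lg * Cmod h) <= eps / 3 * Cmod h).
  { assert (Cmod (f (z + h)%C - f z) * Cmod lg <= eps / 3).
    { apply Rle_trans with (eps / (3 * L) * L).
      apply Rmult_le_compat; try apply Cmod_ge_0; try lra. unfold L; lra.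
      right; field; lra. }
    rewrite <- Rmult_assoc. apply Rmult_le_compat_r; auto. }
  assert (T3 : Cmod (g z) * Cmod (f (z + h)%C - f z - lf * h) <= eps / 3 * Cmod h).
  { apply Rle_trans with (B * (eps / (3 * B) * Cmod h)).
    apply Rmult_le_compat; try apply Cmod_ge_0; auto. unfold B; lra.
    right; field; lra. }
  lra.
Qed.

Lemma cd_inv_shift (p z : C) : z <> p -> cd (fun w => / (w - p))%C z (- / ((z - p) * (z - p)))%C.
Proof.
  intros Hz. set (A := (z - p)%C).
  assert (HA : A <> (RtoC 0)) by (unfold A; apply Cminus_eq_contra; auto).
  assert (HmA : 0 < Cmod A) by (apply Cmod_gt_0; auto).
  apply (cd_quad _ _ _ (2 / (Cmod A * Cmod A * Cmod A)) (Cmod A / 2)); [lra|].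
  intros h Hh.
  assert (HAh : (A + h)%C <> (RtoC 0)) by (apply Cmod_small_ne'; lra).
  replace (z + h - p)%C with (A + h)%C by (unfold A; ring).
  fold A.
  replace (/ (A + h) - / A - - / (A * A) * h)%C with (h * h / (A * A * (A + h)))%C
    by (field; auto).
  rewrite Cmod_div, !Cmod_mult by (repeat apply Cmult_neq_0; auto).
  pose proof (Cmod_lower' A h). pose proof (Cmod_ge_0 h).
  assert (HAh' : Cmod A / 2 <= Cmod (A + h)) by lra.
  unfold Rdiv. rewrite Rmult_comm.
  apply Rle_trans with (/ (Cmod A * Cmod A * (Cmod A / 2)) * (Cmod h * Cmod h)).
  apply Rmult_le_compat_r; [nra|]. apply Rinv_le_contravar.
  { apply Rmult_lt_0_compat; [nra|lra]. }
  apply Rmult_le_compat_l; [nra|lra].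
  right. field. lra.
Qed.

Lemma RtoC_neq (x y : R) : x <> y -> RtoC x <> RtoC y.
Proof. intros H E. apply H. unfold RtoC in E. injection E. auto. Qed.

Definition rcont (f : R -> C) (t : R) : Prop :=
  forall eps, 0 < eps -> exists del, 0 < del /\
    forall s, Rabs (s - t) < del -> Cmod (f s - f t) < eps.

Lemma rcont_fst (f : R -> C) t : rcont f t -> continuous (fun s => fst (f s)) t.
Proof.
  intros H. apply continuity_pt_filterlim.
  intros eps Heps. destruct (H eps Heps) as [d [Hd G]].
  exists d. split; auto. intros x [_ Hx]. simpl in Hx. unfold R_dist in Hx.
  simpl. unfold R_dist. eapply Rle_lt_trans; [|apply (G x Hx)].
  eapply Rle_trans; [|apply Cmod_fst]. simpl. right; f_equal.
Qed.

Lemma rcont_snd (f : R -> C) t : rcont f t -> continuous (fun s => snd (f s)) t.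
Proof.
  intros H. apply continuity_pt_filterlim.
  intros eps Heps. destruct (H eps Heps) as [d [Hd G]].
  exists d. split; auto. intros x [_ Hx]. simpl in Hx. unfold R_dist in Hx.
  simpl. unfold R_dist. eapply Rle_lt_trans; [|apply (G x Hx)].
  eapply Rle_trans; [|apply Cmod_snd]. simpl. right; f_equal.
Qed.

Definition CIok (f : R -> C) (a b : R) : Prop :=
  forall t, Rmin a b <= t <= Rmax a b -> rcont f t.

Lemma CIok_sym f a b : CIok f a b -> CIok f b a.
Proof. unfold CIok; intros H t Ht; apply H; rewrite Rmin_comm, Rmax_comm; auto. Qed.

Lemma CIok_sub f a b c d : a <= b -> CIok f a b -> a <= c <= b -> a <= d <= b -> CIok f c d.
Proof.
  intros Hab H Hc Hd t Ht. apply H. rewrite Rmin_left, Rmax_right by lra.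
  destruct Ht as [H1 H2].
  split. eapply Rle_trans; [|exact H1]. apply Rmin_glb; lra.
  eapply Rle_trans; [exact H2|]. apply Rmax_lub; lra.
Qed.

Lemma ex_RInt_fst f a b : CIok f a b -> ex_RInt (fun t => fst (f t)) a b.
Proof. intros H. apply (ex_RInt_continuous (V:=R_CompleteNormedModule)). intros z Hz. apply rcont_fst. auto. Qed.
Lemma ex_RInt_snd f a b : CIok f a b -> ex_RInt (fun t => snd (f t)) a b.
Proof. intros H. apply (ex_RInt_continuous (V:=R_CompleteNormedModule)). intros z Hz. apply rcont_snd. auto. Qed.

Definition CI (f : R -> C) (a b : R) : C :=
  (RInt (fun t => fst (f t)) a b, RInt (fun t => snd (f t)) a b).

Lemma RInt_plus' (F G : R -> R) a b : ex_RInt F a b -> ex_RInt G a b ->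
  RInt (fun t => F t + G t) a b = RInt F a b + RInt G a b.
Proof. intros. apply (is_RInt_unique (V:=R_CompleteNormedModule)). apply (is_RInt_plus (V:=R_NormedModule) F G); apply (RInt_correct (V:=R_CompleteNormedModule)); auto. Qed.
Lemma RInt_minus' (F G : R -> R) a b : ex_RInt F a b -> ex_RInt G a b ->
  RInt (fun t => F t - G t) a b = RInt F a b - RInt G a b.
Proof. intros. apply (is_RInt_unique (V:=R_CompleteNormedModule)). apply (is_RInt_minus (V:=R_NormedModule) F G); apply (RInt_correct (V:=R_CompleteNormedModule)); auto. Qed.
Lemma RInt_scal' (F : R -> R) k a b : ex_RInt F a b ->
  RInt (fun t => k * F t) a b = k * RInt F a b.
Proof. intros. apply (is_RInt_unique (V:=R_CompleteNormedModule)). apply (is_RInt_scal (V:=R_NormedModule) F); apply (RInt_correct (V:=R_CompleteNormedModule)); auto. Qed.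

Lemma CI_plus f g a b : CIok f a b -> CIok g a b ->
  CI (fun t => f t + g t)%C a b = (CI f a b + CI g a b)%C.
Proof.
  intros Hf Hg. unfold CI. apply C_ext; simpl.
  - apply RInt_plus'; [apply ex_RInt_fst|apply ex_RInt_fst]; auto.
  - apply RInt_plus'; [apply ex_RInt_snd|apply ex_RInt_snd]; auto.
Qed.

Lemma ex_RInt_scal' (F : R -> R) k a b : ex_RInt F a b -> ex_RInt (fun t => k * F t) a b.
Proof. intros H. apply (ex_RInt_scal (V:=R_NormedModule) F); auto. Qed.

Lemma CI_scal c f a b : CIok f a b ->
  CI (fun t => c * f t)%C a b = (c * CI f a b)%C.
Proof.
  intros Hf. assert (E1 := ex_RInt_fst f a b Hf). assert (E2 := ex_RInt_snd f a b Hf).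
  unfold CI. apply C_ext; simpl.
  - rewrite (RInt_minus' (fun t => fst c * fst (f t)) (fun t => snd c * snd (f t))).
    rewrite (RInt_scal' (fun t => fst (f t))), (RInt_scal' (fun t => snd (f t))); auto.
    apply ex_RInt_scal'; auto. apply ex_RInt_scal'; auto.
  - rewrite (RInt_plus' (fun t => fst c * snd (f t)) (fun t => snd c * fst (f t))).
    rewrite (RInt_scal' (fun t => fst (f t))), (RInt_scal' (fun t => snd (f t))); auto.
    apply ex_RInt_scal'; auto. apply ex_RInt_scal'; auto.
Qed.

Lemma rcont_plus f g t : rcont f t -> rcont g t -> rcont (fun s => f s + g s)%C t.
Proof.
  intros Hf Hg eps Heps.
  destruct (Hf (eps/2)) as [d1 [Hd1 G1]]; [lra|].
  destruct (Hg (eps/2)) as [d2 [Hd2 G2]]; [lra|].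
  exists (Rmin d1 d2); split; [apply Rmin_glb_lt; auto|].
  intros s Hs.
  assert (H1 : Rabs (s - t) < d1) by (eapply Rlt_le_trans; [exact Hs| apply Rmin_l]).
  assert (H2 : Rabs (s - t) < d2) by (eapply Rlt_le_trans; [exact Hs| apply Rmin_r]).
  replace (f s + g s - (f t + g t))%C with ((f s - f t) + (g s - g t))%C by ring.
  eapply Rle_lt_trans. apply Cmod_triangle. specialize (G1 s H1). specialize (G2 s H2). lra.
Qed.

Lemma rcont_scal c f t : rcont f t -> rcont (fun s => c * f s)%C t.
Proof.
  intros Hf eps Heps.
  destruct (Hf (eps / (Cmod c + 1))) as [d [Hd G]].
  { apply Rdiv_lt_0_compat; auto. pose proof (Cmod_ge_0 c); lra. }
  exists d; split; auto. intros s Hs.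
  replace (c * f s - c * f t)%C with (c * (f s - f t))%C by ring.
  rewrite Cmod_mult. specialize (G s Hs). pose proof (Cmod_ge_0 c).
  pose proof (Cmod_ge_0 (f s - f t)).
  apply Rle_lt_trans with ((Cmod c + 1) * Cmod (f s - f t)). nra.
  apply Rlt_le_trans with ((Cmod c + 1) * (eps / (Cmod c + 1))).
  apply Rmult_lt_compat_l; lra. right; field; lra.
Qed.

Lemma CIok_plus f g a b : CIok f a b -> CIok g a b -> CIok (fun s => f s + g s)%C a b.
Proof. intros Hf Hg t Ht. apply rcont_plus; auto. Qed.
Lemma CIok_scal c f a b : CIok f a b -> CIok (fun s => c * f s)%C a b.
Proof. intros Hf t Ht. apply rcont_scal; auto. Qed.
Lemma CIok_opp f a b : CIok f a b -> CIok (fun s => - f s)%C a b.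
Proof.
  intros Hf t Ht. intros eps Heps. destruct (rcont_scal (RtoC (-1)) f t (Hf t Ht) eps Heps) as [d [Hd G]].
  exists d; split; auto. intros s Hs. specialize (G s Hs).
  replace (- f s - - f t)%C with (RtoC (-1) * f s - RtoC (-1) * f t)%C by ring. auto.
Qed.
Lemma CIok_minus f g a b : CIok f a b -> CIok g a b -> CIok (fun s => f s - g s)%C a b.
Proof. intros. apply CIok_plus; auto. apply CIok_opp; auto. Qed.


Lemma CI_ext f g a b : (forall t, Rmin a b <= t <= Rmax a b -> f t = g t) ->
  CI f a b = CI g a b.
Proof.
  intros H. unfold CI. apply C_ext; simpl; apply RInt_ext; intros x Hx; rewrite H; auto; lra.
Qed.

Lemma CI_opp f a b : CIok f a b -> CI (fun t => - f t)%C a b = (- CI f a b)%C.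
Proof.
  intros Hf. rewrite (CI_ext _ (fun t => RtoC (-1) * f t)%C).
  rewrite CI_scal; auto. ring. intros; ring.
Qed.

Lemma CI_minus f g a b : CIok f a b -> CIok g a b ->
  CI (fun t => f t - g t)%C a b = (CI f a b - CI g a b)%C.
Proof.
  intros Hf Hg. unfold Cminus. rewrite CI_plus; auto. rewrite CI_opp; auto.
  apply CIok_opp; auto.
Qed.

Lemma CI_Chasles f a b c : CIok f a b -> CIok f b c ->
  (CI f a b + CI f b c)%C = CI f a c.
Proof.
  intros H1 H2. unfold CI. apply C_ext; simpl.
  - apply (RInt_Chasles (V:=R_CompleteNormedModule) (fun t => fst (f t))); apply ex_RInt_fst; auto.
  - apply (RInt_Chasles (V:=R_CompleteNormedModule) (fun t => snd (f t))); apply ex_RInt_snd; auto.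
Qed.

Lemma CI_point f a : CI f a a = RtoC 0.
Proof. unfold CI. rewrite !RInt_point. reflexivity. Qed.

Lemma CI_bound f a b M : a <= b -> CIok f a b ->
  (forall t, a <= t <= b -> Cmod (f t) <= M) -> Cmod (CI f a b) <= 2 * (b - a) * M.
Proof.
  intros Hab Hf HM. eapply Rle_trans. apply Cmod_le_sum. unfold CI; simpl.
  assert (A1 : Rabs (RInt (fun t => fst (f t)) a b) <= (b - a) * M).
  { apply abs_RInt_le_const; auto. apply ex_RInt_fst; auto.
    intros t Ht. eapply Rle_trans. apply Cmod_fst. auto. }
  assert (A2 : Rabs (RInt (fun t => snd (f t)) a b) <= (b - a) * M).
  { apply abs_RInt_le_const; auto. apply ex_RInt_snd; auto.
    intros t Ht. eapply Rle_trans. apply Cmod_snd. auto. }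
  lra.
Qed.

Definition rderiv (P : R -> C) (t0 : R) (d : C) : Prop :=
  forall eps, 0 < eps -> exists del, 0 < del /\
    forall h, Rabs h < del -> Cmod (P (t0 + h)%R - P t0 - RtoC h * d)%C <= eps * Rabs h.

Lemma dpl_bound (F : R -> R) t0 a : derivable_pt_lim F t0 a ->
  forall eps, 0 < eps -> exists del, 0 < del /\
    forall h, Rabs h < del -> Rabs (F (t0 + h) - F t0 - h * a) <= eps * Rabs h.
Proof.
  intros H eps Heps. destruct (H eps Heps) as [d Hd].
  exists d. split. apply cond_pos. intros h Hh.
  destruct (Req_dec h 0) as [E|E].
  - subst. rewrite Rplus_0_r. replace (F t0 - F t0 - 0 * a) with 0 by ring.
    rewrite Rabs_R0. lra.
  - specialize (Hd h E Hh).
    replace (F (t0 + h) - F t0 - h * a) with (h * ((F (t0 + h) - F t0) / h - a)) by (field; auto).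
    rewrite Rabs_mult. rewrite Rmult_comm. apply Rmult_le_compat_r. apply Rabs_pos. lra.
Qed.

Lemma rderiv_of_comp (P : R -> C) t0 d :
  derivable_pt_lim (fun t => fst (P t)) t0 (fst d) ->
  derivable_pt_lim (fun t => snd (P t)) t0 (snd d) -> rderiv P t0 d.
Proof.
  intros H1 H2 eps Heps.
  destruct (dpl_bound _ _ _ H1 (eps/2)) as [d1 [Hd1 G1]]; [lra|].
  destruct (dpl_bound _ _ _ H2 (eps/2)) as [d2 [Hd2 G2]]; [lra|].
  exists (Rmin d1 d2); split; [apply Rmin_glb_lt; auto|].
  intros h Hh.
  assert (Ha : Rabs h < d1) by (eapply Rlt_le_trans; [exact Hh| apply Rmin_l]).
  assert (Hb : Rabs h < d2) by (eapply Rlt_le_trans; [exact Hh| apply Rmin_r]).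
  eapply Rle_trans. apply Cmod_le_sum. specialize (G1 h Ha). specialize (G2 h Hb).
  simpl. replace (fst (P (t0 + h)%R) + - fst (P t0) + - (h * fst d - 0 * snd d))
    with (fst (P (t0 + h)%R) - fst (P t0) - h * fst d) by ring.
  replace (snd (P (t0 + h)%R) + - snd (P t0) + - (h * snd d + 0 * fst d))
    with (snd (P (t0 + h)%R) - snd (P t0) - h * snd d) by ring.
  lra.
Qed.

Lemma rderiv_fst (P : R -> C) t0 d : rderiv P t0 d ->
  derivable_pt_lim (fun t => fst (P t)) t0 (fst d).
Proof.
  intros H eps Heps. destruct (H (eps/2)) as [del [Hdel G]]; [lra|].
  exists (mkposreal del Hdel). intros h Hh0 Hh. simpl in Hh.
  specialize (G h Hh). assert (Hp : 0 < Rabs h) by (apply Rabs_pos_lt; auto).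
  replace ((fst (P (t0 + h)%R) - fst (P t0)) / h - fst d)
    with (fst (P (t0 + h)%R - P t0 - RtoC h * d)%C / h) by (simpl; field; auto).
  unfold Rdiv. rewrite Rabs_mult, Rabs_inv.
  apply Rle_lt_trans with (eps / 2 * Rabs h * / Rabs h).
  apply Rmult_le_compat_r. left; apply Rinv_0_lt_compat; auto.
  eapply Rle_trans. apply Cmod_fst. auto.
  field_simplify; lra.
Qed.

Lemma rderiv_snd (P : R -> C) t0 d : rderiv P t0 d ->
  derivable_pt_lim (fun t => snd (P t)) t0 (snd d).
Proof.
  intros H eps Heps. destruct (H (eps/2)) as [del [Hdel G]]; [lra|].
  exists (mkposreal del Hdel). intros h Hh0 Hh. simpl in Hh.
  specialize (G h Hh). assert (Hp : 0 < Rabs h) by (apply Rabs_pos_lt; auto).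
  replace ((snd (P (t0 + h)%R) - snd (P t0)) / h - snd d)
    with (snd (P (t0 + h)%R - P t0 - RtoC h * d)%C / h) by (simpl; field; auto).
  unfold Rdiv. rewrite Rabs_mult, Rabs_inv.
  apply Rle_lt_trans with (eps / 2 * Rabs h * / Rabs h).
  apply Rmult_le_compat_r. left; apply Rinv_0_lt_compat; auto.
  eapply Rle_trans. apply Cmod_snd. auto.
  field_simplify; lra.
Qed.

Lemma rderiv_chain (G : C -> C) (P : R -> C) t0 l d :
  cd G (P t0) l -> rderiv P t0 d -> rderiv (fun t => G (P t)) t0 (l * d)%C.
Proof.
  intros HG HP eps Heps.
  set (D := Cmod d + 1). set (L := Cmod l + 1).
  assert (HD : 0 < D) by (unfold D; pose proof (Cmod_ge_0 d); lra).
  assert (HL : 0 < L) by (unfold L; pose proof (Cmod_ge_0 l); lra).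
  destruct (HP 1 Rlt_0_1) as [d1 [Hd1 P1]].
  destruct (HP (eps / (2 * L))) as [d2 [Hd2 P2]]. { apply Rdiv_lt_0_compat; lra. }
  destruct (HG (eps / (2 * D))) as [d3 [Hd3 G3]]. { apply Rdiv_lt_0_compat; lra. }
  exists (Rmin d1 (Rmin d2 (d3 / D))). split.
  { repeat apply Rmin_glb_lt; auto. apply Rdiv_lt_0_compat; auto. }
  intros h Hh.
  assert (H1 : Rabs h < d1) by (eapply Rlt_le_trans; [exact Hh| apply Rmin_l]).
  assert (H2 : Rabs h < d2) by (eapply Rlt_le_trans; [exact Hh| eapply Rle_trans; [apply Rmin_r| apply Rmin_l]]).
  assert (H3 : Rabs h < d3 / D) by (eapply Rlt_le_trans; [exact Hh| eapply Rle_trans; [apply Rmin_r| apply Rmin_r]]).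
  set (Dl := (P (t0 + h)%R - P t0)%C).
  specialize (P1 h H1). specialize (P2 h H2). fold Dl in P1, P2.
  pose proof (Rabs_pos h).
  assert (HDl : Cmod Dl <= D * Rabs h).
  { replace Dl with ((Dl - RtoC h * d) + RtoC h * d)%C by ring.
    eapply Rle_trans. apply Cmod_triangle. rewrite Cmod_mult, Cmod_R.
    unfold D. nra. }
  assert (HDl3 : Cmod Dl < d3).
  { apply Rle_lt_trans with (D * Rabs h); auto.
    apply (Rmult_lt_compat_l D) in H3; auto. unfold Rdiv in H3.
    rewrite <- Rmult_assoc, (Rmult_comm D d3), Rmult_assoc, Rinv_r in H3; lra. }
  specialize (G3 Dl HDl3).
  replace (P t0 + Dl)%C with (P (t0 + h)%R) in G3 by (unfold Dl; ring).
  replace (G (P (t0 + h)%R) - G (P t0) - RtoC h * (l * d))%C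
    with ((G (P (t0 + h)%R) - G (P t0) - l * Dl) + l * (Dl - RtoC h * d))%C by ring.
  eapply Rle_trans. apply Cmod_triangle. rewrite Cmod_mult.
  assert (T1 : eps / (2 * D) * Cmod Dl <= eps / 2 * Rabs h).
  { apply Rle_trans with (eps / (2 * D) * (D * Rabs h)).
    apply Rmult_le_compat_l; auto. left; apply Rdiv_lt_0_compat; lra.
    right; field; lra. }
  assert (T2 : Cmod l * Cmod (Dl - RtoC h * d) <= eps / 2 * Rabs h).
  { apply Rle_trans with (L * (eps / (2 * L) * Rabs h)).
    apply Rmult_le_compat; try apply Cmod_ge_0; auto. unfold L; lra.
    right; field; lra. }
  lra.
Qed.

Lemma rderiv_line (w0 v : C) t0 : rderiv (fun t => w0 + RtoC t * v)%C t0 v.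
Proof.
  intros eps Heps. exists 1; split; [lra|]. intros h Hh.
  replace (w0 + RtoC (t0 + h) * v - (w0 + RtoC t0 * v) - RtoC h * v)%C with (RtoC 0).
  rewrite Cmod_0. pose proof (Rabs_pos h). nra.
  rewrite RtoC_plus. ring.
Qed.

Lemma rderiv_ext (P Q : R -> C) t0 d : (forall t, P t = Q t) -> rderiv P t0 d -> rderiv Q t0 d.
Proof.
  intros E H eps Heps. destruct (H eps Heps) as [del [Hd G]]. exists del; split; auto.
  intros h Hh. rewrite <- !E. auto.
Qed.

Lemma CI_FTC (P dP : R -> C) a b :
  (forall t, Rmin a b <= t <= Rmax a b -> rderiv P t (dP t)) -> CIok dP a b ->
  CI dP a b = (P b - P a)%C.
Proof.
  intros HP Hd. unfold CI. apply C_ext; simpl.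
  - apply is_RInt_unique.
    replace (fst (P b) + - fst (P a)) with (minus (fst (P b)) (fst (P a))) by reflexivity.
    apply (is_RInt_derive (fun t => fst (P t))).
    + intros x Hx. apply is_derive_Reals. apply rderiv_fst. auto.
    + intros x Hx. apply rcont_fst. auto.
  - apply is_RInt_unique.
    replace (snd (P b) + - snd (P a)) with (minus (snd (P b)) (snd (P a))) by reflexivity.
    apply (is_RInt_derive (fun t => snd (P t))).
    + intros x Hx. apply is_derive_Reals. apply rderiv_snd. auto.
    + intros x Hx. apply rcont_snd. auto.
Qed.

Definition Hs (g : C -> C) (y a b : R) : C := CI (fun t => g (t, y)) a b.
Definition Vs (g : C -> C) (x c d : R) : C := (Ci * CI (fun t => g (x, t)) c d)%C.
Definition rect (g : C -> C) (a b c d : R) : C :=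
  (Hs g c a b + Vs g b c d - Hs g d a b - Vs g a c d)%C.

Definition OnBd (P : C -> Prop) (a b c d : R) : Prop :=
  (forall t, a <= t <= b -> P (t, c) /\ P (t, d)) /\
  (forall t, c <= t <= d -> P (a, t) /\ P (b, t)).

Definition KC (g : C -> C) (a b c d : R) : Prop :=
  forall x y, a <= x <= b -> c <= y <= d -> ccont g (x, y).

Lemma KC_Bd g a b c d : a <= b -> c <= d -> KC g a b c d -> OnBd (ccont g) a b c d.
Proof.
  intros Hab Hcd H. split; intros t Ht; split; apply H; lra.
Qed.

Lemma KC_sub g a b c d a' b' c' d' : a <= a' -> b' <= b -> c <= c' -> d' <= d ->
  KC g a b c d -> KC g a' b' c' d'.
Proof. intros ? ? ? ? H x y Hx Hy. apply H; lra. Qed.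

Lemma ccont_hline g t y : ccont g (t, y) -> rcont (fun s => g (s, y)) t.
Proof.
  intros H eps Heps. destruct (H eps Heps) as [d [Hd G]]. exists d; split; auto.
  intros s Hs. apply G. rewrite Cmod_hline. auto.
Qed.

Lemma ccont_vline g x t : ccont g (x, t) -> rcont (fun s => g (x, s)) t.
Proof.
  intros H eps Heps. destruct (H eps Heps) as [d [Hd G]]. exists d; split; auto.
  intros s Hs. apply G. rewrite Cmod_vline. auto.
Qed.

Lemma CIok_h g y a b : a <= b -> (forall t, a <= t <= b -> ccont g (t, y)) ->
  CIok (fun s => g (s, y)) a b.
Proof.
  intros Hab H t Ht. rewrite Rmin_left, Rmax_right in Ht by lra.
  apply ccont_hline. auto.
Qed.

Lemma CIok_v g x c d : c <= d -> (forall t, c <= t <= d -> ccont g (x, t)) ->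
  CIok (fun s => g (x, s)) c d.
Proof.
  intros Hcd H t Ht. rewrite Rmin_left, Rmax_right in Ht by lra.
  apply ccont_vline. auto.
Qed.

Lemma ccont_plus f g z : ccont f z -> ccont g z -> ccont (fun w => f w + g w)%C z.
Proof.
  intros Hf Hg eps Heps.
  destruct (Hf (eps/2)) as [d1 [Hd1 G1]]; [lra|].
  destruct (Hg (eps/2)) as [d2 [Hd2 G2]]; [lra|].
  exists (Rmin d1 d2); split; [apply Rmin_glb_lt; auto|].
  intros s Hs.
  assert (H1 : Cmod (s - z) < d1) by (eapply Rlt_le_trans; [exact Hs| apply Rmin_l]).
  assert (H2 : Cmod (s - z) < d2) by (eapply Rlt_le_trans; [exact Hs| apply Rmin_r]).
  replace (f s + g s - (f z + g z))%C with ((f s - f z) + (g s - g z))%C by ring.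
  eapply Rle_lt_trans. apply Cmod_triangle. specialize (G1 s H1). specialize (G2 s H2). lra.
Qed.

Lemma ccont_scal c f z : ccont f z -> ccont (fun w => c * f w)%C z.
Proof.
  intros Hf eps Heps.
  destruct (Hf (eps / (Cmod c + 1))) as [d [Hd G]].
  { apply Rdiv_lt_0_compat; auto. pose proof (Cmod_ge_0 c); lra. }
  exists d; split; auto. intros s Hs.
  replace (c * f s - c * f z)%C with (c * (f s - f z))%C by ring.
  rewrite Cmod_mult. specialize (G s Hs). pose proof (Cmod_ge_0 c).
  pose proof (Cmod_ge_0 (f s - f z)).
  apply Rle_lt_trans with ((Cmod c + 1) * Cmod (f s - f z)). nra.
  apply Rlt_le_trans with ((Cmod c + 1) * (eps / (Cmod c + 1))).
  apply Rmult_lt_compat_l; lra. right; field; lra.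
Qed.

Lemma ccont_opp f z : ccont f z -> ccont (fun w => - f w)%C z.
Proof.
  intros Hf eps Heps. destruct (ccont_scal (RtoC (-1)) f z Hf eps Heps) as [d [Hd G]].
  exists d; split; auto. intros s Hs. specialize (G s Hs).
  replace (- f s - - f z)%C with (RtoC (-1) * f s - RtoC (-1) * f z)%C by ring. auto.
Qed.

Lemma ccont_minus f g z : ccont f z -> ccont g z -> ccont (fun w => f w - g w)%C z.
Proof. intros. apply ccont_plus; auto. apply ccont_opp; auto. Qed.

Lemma ccont_const (c z : C) : ccont (fun _ => c) z.
Proof. apply (cd_ccont _ _ _ (cd_const c z)). Qed.

Lemma ccont_mult f g z : ccont f z -> ccont g z -> ccont (fun w => f w * g w)%C z.
Proof.
  intros Hf Hg eps Heps.
  destruct (ccont_bound f z Hf) as [d0 [Hd0 B0]].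
  assert (HA : 0 < Cmod (f z) + 1) by (pose proof (Cmod_ge_0 (f z)); lra).
  assert (HB : 0 < Cmod (g z) + 1) by (pose proof (Cmod_ge_0 (g z)); lra).
  destruct (Hg (eps / (3 * (Cmod (f z) + 1)))) as [d1 [Hd1 G1]]. { apply Rdiv_lt_0_compat; lra. }
  destruct (Hf (eps / (3 * (Cmod (g z) + 1)))) as [d2 [Hd2 G2]]. { apply Rdiv_lt_0_compat; lra. }
  exists (Rmin d0 (Rmin d1 d2)). split. { repeat apply Rmin_glb_lt; auto. }
  intros w Hw.
  assert (H0 : Cmod (w - z) < d0) by (eapply Rlt_le_trans; [exact Hw| apply Rmin_l]).
  assert (H1 : Cmod (w - z) < d1) by (eapply Rlt_le_trans; [exact Hw| eapply Rle_trans; [apply Rmin_r| apply Rmin_l]]).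
  assert (H2 : Cmod (w - z) < d2) by (eapply Rlt_le_trans; [exact Hw| eapply Rle_trans; [apply Rmin_r| apply Rmin_r]]).
  specialize (B0 w H0). specialize (G1 w H1). specialize (G2 w H2).
  replace (f w * g w - f z * g z)%C with (f w * (g w - g z) + (f w - f z) * g z)%C by ring.
  eapply Rle_lt_trans. apply Cmod_triangle. rewrite !Cmod_mult.
  assert (T1 : Cmod (f w) * Cmod (g w - g z) <= (Cmod (f z) + 1) * (eps / (3 * (Cmod (f z) + 1)))).
  { apply Rmult_le_compat; try apply Cmod_ge_0; try lra. }
  assert (T2 : Cmod (f w - f z) * Cmod (g z) <= eps / (3 * (Cmod (g z) + 1)) * (Cmod (g z) + 1)).
  { apply Rmult_le_compat; try apply Cmod_ge_0; try lra. }
  assert ((Cmod (f z) + 1) * (eps / (3 * (Cmod (f z) + 1))) = eps / 3) by (field; lra).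
  assert (eps / (3 * (Cmod (g z) + 1)) * (Cmod (g z) + 1) = eps / 3) by (field; lra).
  lra.
Qed.

Lemma ccont_inv_shift (p z : C) : z <> p -> ccont (fun w => / (w - p))%C z.
Proof. intros H. exact (cd_ccont _ _ _ (cd_inv_shift p z H)). Qed.

Lemma ccont_ext (f g : C -> C) z r : 0 < r -> (forall w, Cmod (w - z) < r -> f w = g w) ->
  ccont f z -> ccont g z.
Proof.
  intros Hr E H eps Heps. destruct (H eps Heps) as [d [Hd G]].
  exists (Rmin d r); split. apply Rmin_glb_lt; auto.
  intros w Hw.
  assert (H1 : Cmod (w - z) < d) by (eapply Rlt_le_trans; [exact Hw| apply Rmin_l]).
  assert (H2 : Cmod (w - z) < r) by (eapply Rlt_le_trans; [exact Hw| apply Rmin_r]).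
  rewrite <- !E; auto. replace (z - z)%C with (RtoC 0) by ring. rewrite Cmod_0; lra.
Qed.

Definition BdC g a b c d := OnBd (ccont g) a b c d.

Lemma BdC_plus f g a b c d : BdC f a b c d -> BdC g a b c d -> BdC (fun w => f w + g w)%C a b c d.
Proof.
  intros [F1 F2] [G1 G2]. split; intros t Ht.
  - destruct (F1 t Ht), (G1 t Ht); split; apply ccont_plus; auto.
  - destruct (F2 t Ht), (G2 t Ht); split; apply ccont_plus; auto.
Qed.

Lemma BdC_scal k g a b c d : BdC g a b c d -> BdC (fun w => k * g w)%C a b c d.
Proof.
  intros [G1 G2]. split; intros t Ht.
  - destruct (G1 t Ht); split; apply ccont_scal; auto.
  - destruct (G2 t Ht); split; apply ccont_scal; auto.
Qed.

Lemma BdC_minus f g a b c d : BdC f a b c d -> BdC g a b c d -> BdC (fun w => f w - g w)%C a b c d.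
Proof.
  intros [F1 F2] [G1 G2]. split; intros t Ht.
  - destruct (F1 t Ht), (G1 t Ht); split; apply ccont_minus; auto.
  - destruct (F2 t Ht), (G2 t Ht); split; apply ccont_minus; auto.
Qed.

Lemma BdC_mult f g a b c d : BdC f a b c d -> BdC g a b c d -> BdC (fun w => f w * g w)%C a b c d.
Proof.
  intros [F1 F2] [G1 G2]. split; intros t Ht.
  - destruct (F1 t Ht), (G1 t Ht); split; apply ccont_mult; auto.
  - destruct (F2 t Ht), (G2 t Ht); split; apply ccont_mult; auto.
Qed.

Section RectAlg.
Variables (a b c d : R).
Hypothesis (Hab : a <= b) (Hcd : c <= d).

Lemma CIok_hc g : BdC g a b c d -> CIok (fun s => g (s, c)) a b.
Proof. intros [H _]. apply CIok_h; auto. intros t Ht; apply H; auto. Qed.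
Lemma CIok_hd g : BdC g a b c d -> CIok (fun s => g (s, d)) a b.
Proof. intros [H _]. apply CIok_h; auto. intros t Ht; apply H; auto. Qed.
Lemma CIok_va g : BdC g a b c d -> CIok (fun s => g (a, s)) c d.
Proof. intros [_ H]. apply CIok_v; auto. intros t Ht; apply H; auto. Qed.
Lemma CIok_vb g : BdC g a b c d -> CIok (fun s => g (b, s)) c d.
Proof. intros [_ H]. apply CIok_v; auto. intros t Ht; apply H; auto. Qed.

Lemma rect_plus f g : BdC f a b c d -> BdC g a b c d ->
  rect (fun w => f w + g w)%C a b c d = (rect f a b c d + rect g a b c d)%C.
Proof.
  intros Hf Hg. unfold rect, Hs, Vs.
  rewrite !(CI_plus (fun s => f (s, _)) (fun s => g (s, _))) by (first [apply CIok_hc|apply CIok_hd]; auto).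
  rewrite !(CI_plus (fun s => f (_, s)) (fun s => g (_, s))) by (first [apply CIok_va|apply CIok_vb]; auto).
  ring.
Qed.

Lemma rect_scal k g : BdC g a b c d ->
  rect (fun w => k * g w)%C a b c d = (k * rect g a b c d)%C.
Proof.
  intros Hg. unfold rect, Hs, Vs.
  rewrite !(CI_scal k (fun s => g (s, _))) by (first [apply CIok_hc|apply CIok_hd]; auto).
  rewrite !(CI_scal k (fun s => g (_, s))) by (first [apply CIok_va|apply CIok_vb]; auto).
  ring.
Qed.

Lemma rect_minus f g : BdC f a b c d -> BdC g a b c d ->
  rect (fun w => f w - g w)%C a b c d = (rect f a b c d - rect g a b c d)%C.
Proof.
  intros Hf Hg. unfold Cminus at 1.
  rewrite rect_plus; auto.
  2:{ apply (BdC_scal (RtoC (-1))) in Hg. destruct Hg as [G1 G2]. split; intros t Ht.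
      - destruct (G1 t Ht). split; eapply ccont_ext; try apply Rlt_0_1; try eassumption;
        intros; simpl; ring.
      - destruct (G2 t Ht). split; eapply ccont_ext; try apply Rlt_0_1; try eassumption;
        intros; simpl; ring. }
  assert (E : rect (fun w => - g w)%C a b c d = rect (fun w => RtoC (-1) * g w)%C a b c d).
  { unfold rect, Hs, Vs. repeat (rewrite (CI_ext (fun t => - g _)%C (fun t => RtoC (-1) * g _)%C)
      by (intros; ring)). reflexivity. }
  rewrite E, rect_scal; auto. ring.
Qed.

Lemma rect_ext f g : OnBd (fun w => f w = g w) a b c d -> rect f a b c d = rect g a b c d.
Proof.
  intros [E1 E2]. unfold rect, Hs, Vs.
  rewrite (CI_ext (fun t => f (t, c)) (fun t => g (t, c))).
  rewrite (CI_ext (fun t => f (t, d)) (fun t => g (t, d))).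
  rewrite (CI_ext (fun t => f (a, t)) (fun t => g (a, t))).
  rewrite (CI_ext (fun t => f (b, t)) (fun t => g (b, t))). reflexivity.
  all: intros t Ht; rewrite ?Rmin_left, ?Rmax_right in Ht by lra.
  all: first [apply (proj1 (E1 t Ht)) | apply (proj2 (E1 t Ht)) | apply (proj1 (E2 t Ht)) | apply (proj2 (E2 t Ht))].
Qed.

Lemma rect_bound g M : BdC g a b c d -> OnBd (fun w => Cmod (g w) <= M) a b c d ->
  Cmod (rect g a b c d) <= 4 * M * ((b - a) + (d - c)).
Proof.
  intros Hg [M1 M2]. unfold rect, Hs, Vs.
  assert (B1 : Cmod (CI (fun t => g (t, c)) a b) <= 2 * (b - a) * M).
  { apply CI_bound; auto. apply CIok_hc; auto. intros t Ht; apply M1; auto. }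
  assert (B2 : Cmod (CI (fun t => g (t, d)) a b) <= 2 * (b - a) * M).
  { apply CI_bound; auto. apply CIok_hd; auto. intros t Ht; apply M1; auto. }
  assert (B3 : Cmod (CI (fun t => g (a, t)) c d) <= 2 * (d - c) * M).
  { apply CI_bound; auto. apply CIok_va; auto. intros t Ht; apply M2; auto. }
  assert (B4 : Cmod (CI (fun t => g (b, t)) c d) <= 2 * (d - c) * M).
  { apply CI_bound; auto. apply CIok_vb; auto. intros t Ht; apply M2; auto. }
  set (X1 := CI (fun t => g (t, c)) a b) in *.
  set (X2 := CI (fun t => g (t, d)) a b) in *.
  set (X3 := CI (fun t => g (a, t)) c d) in *.
  set (X4 := CI (fun t => g (b, t)) c d) in *.
  eapply Rle_trans. apply Cmod_triangle_sub.
  eapply Rle_trans. apply Rplus_le_compat_l. rewrite Cmod_mult, Cmod_Ci, Rmult_1_l. apply B3.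
  eapply Rle_trans. apply Rplus_le_compat_r. apply Cmod_triangle_sub.
  eapply Rle_trans. apply Rplus_le_compat_r. apply Rplus_le_compat_r. apply Cmod_triangle.
  rewrite Cmod_mult, Cmod_Ci, Rmult_1_l. lra.
Qed.

End RectAlg.

Lemma rect_splitx g a m b c d : a <= m <= b -> c <= d -> BdC g a b c d ->
  (forall t, c <= t <= d -> ccont g (m, t)) ->
  rect g a b c d = (rect g a m c d + rect g m b c d)%C.
Proof.
  intros Hm Hcd [H1 H2] Hmid. unfold rect, Hs, Vs.
  assert (Ec : CI (fun t => g (t, c)) a b = (CI (fun t => g (t, c)) a m + CI (fun t => g (t, c)) m b)%C).
  { rewrite CI_Chasles; auto.
    - apply CIok_h; [lra|]. intros t Ht; apply H1; lra.
    - apply CIok_h; [lra|]. intros t Ht; apply H1; lra. }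
  assert (Ed : CI (fun t => g (t, d)) a b = (CI (fun t => g (t, d)) a m + CI (fun t => g (t, d)) m b)%C).
  { rewrite CI_Chasles; auto.
    - apply CIok_h; [lra|]. intros t Ht; apply H1; lra.
    - apply CIok_h; [lra|]. intros t Ht; apply H1; lra. }
  rewrite Ec, Ed. ring.
Qed.

Lemma rect_splity g a b c n d : a <= b -> c <= n <= d -> BdC g a b c d ->
  (forall t, a <= t <= b -> ccont g (t, n)) ->
  rect g a b c d = (rect g a b c n + rect g a b n d)%C.
Proof.
  intros Hab Hn [H1 H2] Hmid. unfold rect, Hs, Vs.
  assert (Ea : CI (fun t => g (a, t)) c d = (CI (fun t => g (a, t)) c n + CI (fun t => g (a, t)) n d)%C).
  { rewrite CI_Chasles; auto.
    - apply CIok_v; [lra|]. intros t Ht; apply H2; lra.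
    - apply CIok_v; [lra|]. intros t Ht; apply H2; lra. }
  assert (Eb : CI (fun t => g (b, t)) c d = (CI (fun t => g (b, t)) c n + CI (fun t => g (b, t)) n d)%C).
  { rewrite CI_Chasles; auto.
    - apply CIok_v; [lra|]. intros t Ht; apply H2; lra.
    - apply CIok_v; [lra|]. intros t Ht; apply H2; lra. }
  rewrite Ea, Eb. ring.
Qed.

Lemma rect_degx g a c d : rect g a a c d = RtoC 0.
Proof. unfold rect, Hs. rewrite !CI_point. ring. Qed.

Lemma rect_degy g a b c : rect g a b c c = RtoC 0.
Proof. unfold rect, Vs. rewrite !CI_point. ring. Qed.

Lemma rderiv_hpath y t : rderiv (fun s => (s, y)) t (RtoC 1).
Proof.
  apply rderiv_of_comp; simpl.
  - apply derivable_pt_lim_id.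
  - apply derivable_pt_lim_const.
Qed.

Lemma rderiv_vpath x t : rderiv (fun s => (x, s)) t Ci.
Proof.
  apply rderiv_of_comp; simpl.
  - apply derivable_pt_lim_const.
  - apply derivable_pt_lim_id.
Qed.

Lemma rect_prim (G g : C -> C) a b c d : a <= b -> c <= d ->
  OnBd (fun w => cd G w (g w) /\ ccont g w) a b c d -> rect g a b c d = RtoC 0.
Proof.
  intros Hab Hcd [H1 H2].
  assert (Hc : BdC g a b c d).
  { split; intros t Ht; split; first [apply (proj2 (proj1 (H1 t Ht))) | apply (proj2 (proj2 (H1 t Ht)))
     | apply (proj2 (proj1 (H2 t Ht))) | apply (proj2 (proj2 (H2 t Ht)))]. }
  unfold rect, Hs, Vs.
  assert (Eh : forall y, (forall t, a <= t <= b -> cd G (t, y) (g (t, y))) ->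
     CIok (fun s => g (s, y)) a b ->
     CI (fun t => g (t, y)) a b = (G (b, y) - G (a, y))%C).
  { intros y Hy Hok. apply (CI_FTC (fun s => G (s, y))); auto.
    intros t Ht. rewrite Rmin_left, Rmax_right in Ht by lra.
    rewrite <- (Cmult_1_r (g (t, y))).
    apply (rderiv_chain G (fun s => (s, y))). apply Hy; auto. apply rderiv_hpath. }
  assert (Ev : forall x, (forall t, c <= t <= d -> cd G (x, t) (g (x, t))) ->
     CIok (fun s => g (x, s)) c d ->
     (Ci * CI (fun t => g (x, t)) c d)%C = (G (x, d) - G (x, c))%C).
  { intros x Hx Hok. rewrite <- CI_scal; auto.
    apply (CI_FTC (fun s => G (x, s))).
    - intros t Ht. rewrite Rmin_left, Rmax_right in Ht by lra.
      rewrite Cmult_comm. apply (rderiv_chain G (fun s => (x, s))). apply Hx; auto. apply rderiv_vpath.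
    - apply CIok_scal; auto. }
  rewrite (Eh c), (Eh d), (Ev a), (Ev b).
  - ring.
  all: try (intros t Ht; first [apply (proj1 (proj1 (H1 t Ht))) | apply (proj1 (proj2 (H1 t Ht)))
     | apply (proj1 (proj1 (H2 t Ht))) | apply (proj1 (proj2 (H2 t Ht)))]; fail).
  all: first [ apply (CIok_hc a b c d) | apply (CIok_hd a b c d) | apply (CIok_va a b c d) | apply (CIok_vb a b c d) ]; auto.
Qed.

Record Rct := mkR { ra : R; rb : R; rc : R; rd : R }.

Definition rr (g : C -> C) (r : Rct) := rect g (ra r) (rb r) (rc r) (rd r).
Definition mx r := (ra r + rb r) / 2.
Definition my r := (rc r + rd r) / 2.
Definition q1 r := mkR (ra r) (mx r) (rc r) (my r).
Definition q2 r := mkR (mx r) (rb r) (rc r) (my r).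
Definition q3 r := mkR (ra r) (mx r) (my r) (rd r).
Definition q4 r := mkR (mx r) (rb r) (my r) (rd r).

Definition valid r := ra r <= rb r /\ rc r <= rd r.
Definition KCr g r := KC g (ra r) (rb r) (rc r) (rd r).

Definition subr (r' r : Rct) := ra r <= ra r' /\ rb r' <= rb r /\ rc r <= rc r' /\ rd r' <= rd r.

Lemma quarters_sum g r : valid r -> KCr g r ->
  rr g r = (rr g (q1 r) + rr g (q2 r) + rr g (q3 r) + rr g (q4 r))%C.
Proof.
  destruct r as [a b c d]. unfold valid, KCr, rr, q1, q2, q3, q4, mx, my; simpl.
  intros [Hab Hcd] HK.
  rewrite (rect_splitx g a ((a + b) / 2) b c d); try lra.
  2:{ apply KC_Bd; auto. } 2:{ intros t Ht; apply HK; lra. }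
  rewrite (rect_splity g a ((a + b) / 2) c ((c + d) / 2) d); try lra.
  2:{ apply KC_Bd; try lra. eapply KC_sub; [| | | | exact HK]; lra. }
  2:{ intros t Ht; apply HK; lra. }
  rewrite (rect_splity g ((a + b) / 2) b c ((c + d) / 2) d); try lra.
  2:{ apply KC_Bd; try lra. eapply KC_sub; [| | | | exact HK]; lra. }
  2:{ intros t Ht; apply HK; lra. }
  ring.
Qed.

Definition pick (g : C -> C) (r : Rct) : Rct :=
  if Rle_dec (Cmod (rr g r) / 4) (Cmod (rr g (q1 r))) then q1 r else
  if Rle_dec (Cmod (rr g r) / 4) (Cmod (rr g (q2 r))) then q2 r else
  if Rle_dec (Cmod (rr g r) / 4) (Cmod (rr g (q3 r))) then q3 r else q4 r.

Lemma pick_spec g r : valid r -> KCr g r ->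
  Cmod (rr g r) / 4 <= Cmod (rr g (pick g r)) /\ subr (pick g r) r /\
  rb (pick g r) - ra (pick g r) = (rb r - ra r) / 2 /\
  rd (pick g r) - rc (pick g r) = (rd r - rc r) / 2.
Proof.
  intros Hv HK. pose proof (quarters_sum g r Hv HK) as E.
  destruct Hv as [Hab Hcd].
  unfold pick.
  destruct (Rle_dec _ (Cmod (rr g (q1 r)))) as [C1|C1].
  { split; auto. unfold subr, q1, mx, my; simpl; repeat split; lra. }
  destruct (Rle_dec _ (Cmod (rr g (q2 r)))) as [C2|C2].
  { split; auto. unfold subr, q2, mx, my; simpl; repeat split; lra. }
  destruct (Rle_dec _ (Cmod (rr g (q3 r)))) as [C3|C3].
  { split; auto. unfold subr, q3, mx, my; simpl; repeat split; lra. }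
  split.
  { apply Rnot_lt_le. intro C4. apply Rnot_le_lt in C1. apply Rnot_le_lt in C2. apply Rnot_le_lt in C3.
    assert (Cmod (rr g r) <= Cmod (rr g (q1 r)) + Cmod (rr g (q2 r)) + Cmod (rr g (q3 r)) + Cmod (rr g (q4 r))).
    { rewrite E. eapply Rle_trans. apply Cmod_triangle. apply Rplus_le_compat_r.
      eapply Rle_trans. apply Cmod_triangle. apply Rplus_le_compat_r. apply Cmod_triangle. }
    lra. }
  unfold subr, q4, mx, my; simpl; repeat split; lra.
Qed.

Lemma INR_lt_pow2 n : INR n < 2 ^ n.
Proof.
  induction n. simpl; lra.
  rewrite S_INR. simpl. assert (1 <= 2 ^ n) by (apply pow_R1_Rle; lra). lra.
Qed.

Lemma pow2_large A : exists n, A < 2 ^ n.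
Proof.
  destruct (archimed A) as [H _].
  destruct (Rle_dec A 0).
  - exists 0%nat. simpl. lra.
  - assert (0 <= IZR (up A)) by lra.
    exists (Z.to_nat (up A)).
    pose proof (INR_lt_pow2 (Z.to_nat (up A))) as H1. rewrite INR_IZR_INZ, Z2Nat.id in H1.
    lra. apply le_IZR; lra.
Qed.

Lemma pow2_pos n : 0 < 2 ^ n.
Proof. apply pow_lt; lra. Qed.

Lemma cd_aff_prim (c0 l zs w : C) :
  cd (fun w => (c0 * w + l * (w - zs) * (w - zs) / RtoC 2)%C) w (c0 + l * (w - zs))%C.
Proof.
  apply (cd_quad _ _ _ (Cmod l) 1); [lra|]. intros h _.
  assert (H2 : RtoC 2 <> RtoC 0) by (apply RtoC_neq; lra).
  replace (c0 * (w + h) + l * (w + h - zs) * (w + h - zs) / RtoC 2 -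
     (c0 * w + l * (w - zs) * (w - zs) / RtoC 2) - (c0 + l * (w - zs)) * h)%C
    with (l * h * h / RtoC 2)%C by (field; auto).
  rewrite Cmod_div, !Cmod_mult, Cmod_R, Rabs_right by (auto; lra).
  pose proof (Cmod_ge_0 l); pose proof (Cmod_ge_0 h). nra.
Qed.

Theorem goursat (g : C -> C) a b c d : a <= b -> c <= d ->
  (forall x y, a <= x <= b -> c <= y <= d -> exists l, cd g (x, y) l) ->
  rect g a b c d = RtoC 0.
Proof.
  intros Hab Hcd Hd.
  assert (HK : KC g a b c d).
  { intros x y Hx Hy. destruct (Hd x y Hx Hy) as [l Hl]. eapply cd_ccont; eauto. }
  set (r0 := mkR a b c d).
  set (sq := fun n => Nat.iter n (pick g) r0).
  assert (Inv : forall n, valid (sq n) /\ subr (sq n) r0 /\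
     rb (sq n) - ra (sq n) = (b - a) / 2 ^ n /\ rd (sq n) - rc (sq n) = (d - c) / 2 ^ n /\
     Cmod (rr g r0) / (2 ^ n * 2 ^ n) <= Cmod (rr g (sq n))).
  { induction n.
    - simpl. unfold valid, subr; simpl. repeat split; try lra; try (apply Req_le; field).
    - destruct IHn as [Hv [Hs [Hw1 [Hw2 Hc]]]].
      assert (HKn : KCr g (sq n)).
      { unfold KCr. destruct Hs as [? [? [? ?]]]. eapply KC_sub; [| | | | exact HK]; simpl in *; lra. }
      destruct (pick_spec g (sq n) Hv HKn) as [P1 [P2 [P3 P4]]].
      change (sq (S n)) with (pick g (sq n)).
      pose proof (pow2_pos n).
      destruct P2 as [S1 [S2 [S3 S4]]]. destruct Hs as [T1 [T2 [T3 T4]]]. destruct Hv as [V1 V2].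
      unfold valid, subr. simpl in *.
      repeat split; try lra.
      + rewrite P3, Hw1. field. lra.
      + rewrite P4, Hw2. field. lra.
      + eapply Rle_trans; [|exact P1].
        replace (Cmod (rr g r0) / (2 * 2 ^ n * (2 * 2 ^ n))) with (Cmod (rr g r0) / (2 ^ n * 2 ^ n) / 4)
          by (field; lra). lra. }
  assert (Mono : forall n, subr (sq (S n)) (sq n)).
  { intros n. destruct (Inv n) as [Hv [Hs _]].
    assert (HKn : KCr g (sq n)).
    { unfold KCr. destruct Hs as [? [? [? ?]]]. eapply KC_sub; [| | | | exact HK]; simpl in *; lra. }
    destruct (pick_spec g (sq n) Hv HKn) as [_ [P2 _]]. exact P2. }
  assert (Nest : forall n m, (n <= m)%nat -> subr (sq m) (sq n)).
  { intros n m Hnm. induction Hnm.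
    - unfold subr; repeat split; lra.
    - destruct IHHnm as [A1 [A2 [A3 A4]]]. destruct (Mono m) as [B1 [B2 [B3 B4]]].
      unfold subr; repeat split; lra. }
  assert (Bx : forall n m, ra (sq n) <= rb (sq m)).
  { intros n m. destruct (Nat.le_ge_cases n m) as [Hnm|Hnm].
    - destruct (Nest n m Hnm) as [A1 _]. destruct (Inv m) as [[V1 _] _]. lra.
    - destruct (Nest m n Hnm) as [_ [A2 _]]. destruct (Inv n) as [[V1 _] _]. lra. }
  assert (By : forall n m, rc (sq n) <= rd (sq m)).
  { intros n m. destruct (Nat.le_ge_cases n m) as [Hnm|Hnm].
    - destruct (Nest n m Hnm) as [_ [_ [A1 _]]]. destruct (Inv m) as [[_ V1] _]. lra.
    - destruct (Nest m n Hnm) as [_ [_ [_ A2]]]. destruct (Inv n) as [[_ V1] _]. lra. }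
  destruct (completeness (fun x => exists n, x = ra (sq n))) as [xs [Hxs1 Hxs2]].
  { exists b. intros x [n ->]. specialize (Bx n 0%nat). simpl in Bx. exact Bx. }
  { exists (ra (sq 0%nat)); exists 0%nat; auto. }
  destruct (completeness (fun y => exists n, y = rc (sq n))) as [ys [Hys1 Hys2]].
  { exists d. intros y [n ->]. specialize (By n 0%nat). simpl in By. exact By. }
  { exists (rc (sq 0%nat)); exists 0%nat; auto. }
  assert (Xin : forall n, ra (sq n) <= xs <= rb (sq n)).
  { intros n. split. apply Hxs1. exists n; auto.
    apply Hxs2. intros x [m ->]. apply Bx. }
  assert (Yin : forall n, rc (sq n) <= ys <= rd (sq n)).
  { intros n. split. apply Hys1. exists n; auto.
    apply Hys2. intros y [m ->]. apply By. }
  assert (Hz : a <= xs <= b /\ c <= ys <= d).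
  { specialize (Xin 0%nat). specialize (Yin 0%nat). simpl in *. lra. }
  destruct (Hd xs ys (proj1 Hz) (proj2 Hz)) as [l Hl].
  set (zs := (xs, ys) : C).
  set (S := (b - a) + (d - c)).
  assert (HS : 0 <= S) by (unfold S; lra).
  assert (Key : forall eps, 0 < eps -> Cmod (rr g r0) <= 4 * eps * (S * S)).
  { intros eps Heps. destruct (Hl eps Heps) as [del [Hdel Gl]].
    destruct (pow2_large (S / del)) as [n Hn].
    pose proof (pow2_pos n) as Hp.
    destruct (Inv n) as [[V1 V2] [Hs [Hw1 [Hw2 Hc]]]].
    set (an := ra (sq n)) in *. set (bn := rb (sq n)) in *.
    set (cn := rc (sq n)) in *. set (dn := rd (sq n)) in *.
    assert (HSn : S / 2 ^ n < del).
    { assert (H1 : S < del * 2 ^ n) by (assert (S = del * (S / del)) by (field; lra); nra).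
      apply (Rmult_lt_reg_r (2 ^ n)); auto.
      replace (S / 2 ^ n * 2 ^ n) with S by (field; lra). lra. }
    assert (Hwn : (bn - an) + (dn - cn) = S / 2 ^ n) by (rewrite Hw1, Hw2; unfold S; field; lra).
    assert (Close : forall x y, an <= x <= bn -> cn <= y <= dn -> Cmod ((x, y) - zs)%C <= S / 2 ^ n).
    { intros x y Hx Hy. eapply Rle_trans. apply Cmod_le_sum. unfold zs; simpl.
      specialize (Xin n). specialize (Yin n). rewrite <- Hwn.
      unfold an, bn, cn, dn in *.
      unfold Rabs; repeat destruct Rcase_abs; lra. }
    set (aff := fun w => (g zs + l * (w - zs))%C).
    set (e := fun w => (g w - aff w)%C).
    assert (KCn : KC g an bn cn dn).
    { destruct Hs as [H1 [H2 [H3 H4]]]. unfold r0 in *; simpl in *.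
      unfold an, bn, cn, dn; eapply KC_sub; [| | | | exact HK]; lra. }
    assert (Caff : forall w, ccont aff w).
    { intros w. apply (cd_ccont _ _ l). apply (cd_quad _ _ _ 0 1); [lra|]. intros h _.
      unfold aff. replace (g zs + l * (w + h - zs) - (g zs + l * (w - zs)) - l * h)%C with (RtoC 0) by ring.
      rewrite Cmod_0. lra. }
    assert (BdCg : BdC g an bn cn dn) by (apply KC_Bd; auto).
    assert (BdCa : BdC aff an bn cn dn) by (split; intros; split; apply Caff).
    assert (Raff : rect aff an bn cn dn = RtoC 0).
    { apply (rect_prim (fun w => (g zs * w + l * (w - zs) * (w - zs) / RtoC 2)%C)); auto.
      split; intros t Ht; split; split; try apply Caff; apply cd_aff_prim. }
    assert (Re : rr g (sq n) = rect e an bn cn dn).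
    { unfold rr. fold an bn cn dn. unfold e. rewrite rect_minus; auto. rewrite Raff. ring. }
    assert (Be : Cmod (rect e an bn cn dn) <= 4 * (eps * (S / 2 ^ n)) * ((bn - an) + (dn - cn))).
    { apply rect_bound; auto. apply BdC_minus; auto.
      assert (Hpt : forall x y, an <= x <= bn -> cn <= y <= dn -> Cmod (e (x, y)) <= eps * (S / 2 ^ n)).
      { intros x y Hx Hy. specialize (Close x y Hx Hy).
        specialize (Gl ((x, y) - zs)%C (Rle_lt_trans _ _ _ Close HSn)).
        unfold e, aff, zs in *.
        assert (Exy : ((xs, ys) + ((x, y) - (xs, ys)))%C = (x, y)) by (apply C_ext; simpl; ring).
        rewrite Exy in Gl.
        replace (g (x, y) - (g (xs, ys) + l * ((x, y) - (xs, ys))))%C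
          with (g (x, y) - g (xs, ys) - l * ((x, y) - (xs, ys)))%C by ring.
        eapply Rle_trans. exact Gl. apply Rmult_le_compat_l; lra. }
      split; intros t Ht; split; apply Hpt; lra. }
    rewrite Hwn in Be. rewrite <- Re in Be.
    assert (E4 : 4 * (eps * (S / 2 ^ n)) * (S / 2 ^ n) = 4 * eps * (S * S) / (2 ^ n * 2 ^ n)) by (field; lra).
    rewrite E4 in Be.
    assert (Cmod (rr g r0) / (2 ^ n * 2 ^ n) <= 4 * eps * (S * S) / (2 ^ n * 2 ^ n)) by lra.
    apply (Rmult_le_compat_r (2 ^ n * 2 ^ n)) in H; [|nra].
    unfold Rdiv in H. rewrite !Rmult_assoc, Rinv_l in H by nra. lra. }
  assert (Z : Cmod (rr g r0) = 0).
  { apply Rle_antisym; [|apply Cmod_ge_0]. apply Rnot_lt_le. intro Hp.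
    set (eps := Cmod (rr g r0) / (8 * (S * S + 1))).
    assert (He : 0 < eps) by (unfold eps; apply Rdiv_lt_0_compat; nra).
    specialize (Key eps He). unfold eps in Key.
    assert (4 * (Cmod (rr g r0) / (8 * (S * S + 1))) * (S * S) <= Cmod (rr g r0) / 2).
    { apply (Rmult_le_reg_r (8 * (S * S + 1))). nra. field_simplify; nra. }
    lra. }
  apply Cmod_eq_0 in Z. exact Z.
Qed.

Lemma rect_avoid g a b c d p : a <= b -> c <= d -> KC g a b c d ->
  (forall x y, a <= x <= b -> c <= y <= d -> (x, y) <> p -> exists l, cd g (x, y) l) ->
  ~ (a <= fst p <= b /\ c <= snd p <= d) -> rect g a b c d = RtoC 0.
Proof.
  intros Hab Hcd HK Hd Hp. apply goursat; auto.
  intros x y Hx Hy. apply Hd; auto. intros E. apply Hp. rewrite <- E. simpl. auto.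
Qed.

Theorem goursat_exc (g : C -> C) a b c d p : a <= b -> c <= d -> KC g a b c d ->
  (forall x y, a <= x <= b -> c <= y <= d -> (x, y) <> p -> exists l, cd g (x, y) l) ->
  rect g a b c d = RtoC 0.
Proof.
  intros Hab Hcd HK Hd.
  destruct p as [px py].
  destruct (classic (a <= px <= b /\ c <= py <= d)) as [Hin|Hout].
  2:{ apply (rect_avoid g a b c d (px, py)); auto. }
  destruct Hin as [Hpx Hpy].
  assert (Cp : ccont g (px, py)) by (apply HK; auto).
  destruct (ccont_bound g _ Cp) as [d0 [Hd0 B0]].
  assert (Bnd : forall del, 0 < del -> del < d0 / 2 ->
            Cmod (rect g a b c d) <= 16 * del * (Cmod (g (px, py)) + 1)).
  { intros del Hdel Hdel0.
    set (x1 := Rmax a (px - del)). set (x2 := Rmin b (px + del)).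
    set (y1 := Rmax c (py - del)). set (y2 := Rmin d (py + del)).
    assert (Hx1 : a <= x1 <= px) by (unfold x1; split; [apply Rmax_l | apply Rmax_lub; lra]).
    assert (Hx2 : px <= x2 <= b) by (unfold x2; split; [apply Rmin_glb; lra | apply Rmin_l]).
    assert (Hy1 : c <= y1 <= py) by (unfold y1; split; [apply Rmax_l | apply Rmax_lub; lra]).
    assert (Hy2 : py <= y2 <= d) by (unfold y2; split; [apply Rmin_glb; lra | apply Rmin_l]).
    assert (Hx1' : px - del <= x1) by (unfold x1; apply Rmax_r).
    assert (Hx2' : x2 <= px + del) by (unfold x2; apply Rmin_r).
    assert (Hy1' : py - del <= y1) by (unfold y1; apply Rmax_r).
    assert (Hy2' : y2 <= py + del) by (unfold y2; apply Rmin_r).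
    assert (Sub : forall a' b' c' d', a <= a' -> b' <= b -> c <= c' -> d' <= d ->
                   a' <= b' -> c' <= d' ->
                   (a' = b' \/ ~ (a' <= px <= b')) \/ (c' = d' \/ ~ (c' <= py <= d')) ->
                   rect g a' b' c' d' = RtoC 0).
    { intros a' b' c' d' ? ? ? ? ? ? [[E|E]|[E|E]].
      - subst. apply rect_degx.
      - apply (rect_avoid g a' b' c' d' (px, py)); try lra.
        eapply KC_sub; [| | | | exact HK]; lra.
        intros x y Hx Hy Hne. apply Hd; [split; lra | split; lra | exact Hne]. simpl. tauto.
      - subst. apply rect_degy.
      - apply (rect_avoid g a' b' c' d' (px, py)); try lra.
        eapply KC_sub; [| | | | exact HK]; lra.
        intros x y Hx Hy Hne. apply Hd; [split; lra | split; lra | exact Hne]. simpl. tauto. }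
    assert (Left : rect g a x1 c d = RtoC 0).
    { apply Sub; try lra. left. unfold x1. destruct (Rle_dec (px - del) a).
      left. rewrite Rmax_left; lra. right. rewrite Rmax_right by lra. lra. }
    assert (Right : rect g x2 b c d = RtoC 0).
    { apply Sub; try lra. left. unfold x2. destruct (Rle_dec b (px + del)).
      left. rewrite Rmin_left; lra. right. rewrite Rmin_right by lra. lra. }
    assert (Bot : rect g x1 x2 c y1 = RtoC 0).
    { apply Sub; try lra. right. unfold y1. destruct (Rle_dec (py - del) c).
      left. rewrite Rmax_left; lra. right. rewrite Rmax_right by lra. lra. }
    assert (Top : rect g x1 x2 y2 d = RtoC 0).
    { apply Sub; try lra. right. unfold y2. destruct (Rle_dec d (py + del)).
      left. rewrite Rmin_left; lra. right. rewrite Rmin_right by lra. lra. }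
    rewrite (rect_splitx g a x1 b c d); try lra.
    2:{ apply KC_Bd; auto. } 2:{ intros; apply HK; lra. }
    rewrite Left.
    rewrite (rect_splitx g x1 x2 b c d); try lra.
    2:{ apply KC_Bd; try lra. eapply KC_sub; [| | | | exact HK]; lra. } 2:{ intros; apply HK; lra. }
    rewrite Right.
    rewrite (rect_splity g x1 x2 c y1 d); try lra.
    2:{ apply KC_Bd; try lra. eapply KC_sub; [| | | | exact HK]; lra. } 2:{ intros; apply HK; lra. }
    rewrite Bot.
    rewrite (rect_splity g x1 x2 y1 y2 d); try lra.
    2:{ apply KC_Bd; try lra. eapply KC_sub; [| | | | exact HK]; lra. } 2:{ intros; apply HK; lra. }
    rewrite Top.
    replace (RtoC 0 + (RtoC 0 + (rect g x1 x2 y1 y2 + RtoC 0) + RtoC 0))%C with (rect g x1 x2 y1 y2) by ring.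
    eapply Rle_trans. apply (rect_bound x1 x2 y1 y2); try lra.
    - apply KC_Bd; try lra. eapply KC_sub; [| | | | exact HK]; lra.
    - assert (Hpt : forall x y, x1 <= x <= x2 -> y1 <= y <= y2 -> Cmod (g (x, y)) <= Cmod (g (px, py)) + 1).
      { intros x y Hx Hy. apply B0. eapply Rle_lt_trans. apply Cmod_le_sum. simpl.
        unfold Rabs; repeat destruct Rcase_abs; lra. }
      split; intros t Ht; split; apply Hpt; lra.
    - pose proof (Cmod_ge_0 (g (px, py))). nra. }
  assert (Z : Cmod (rect g a b c d) = 0).
  { apply Rle_antisym; [|apply Cmod_ge_0]. apply Rnot_lt_le. intro Hpos.
    set (Q := Cmod (g (px, py)) + 1).
    assert (HQ : 0 < Q) by (unfold Q; pose proof (Cmod_ge_0 (g (px, py))); lra).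
    set (del := Rmin (d0 / 4) (Cmod (rect g a b c d) / (32 * Q))).
    assert (Hdel : 0 < del) by (unfold del; apply Rmin_glb_lt; [lra| apply Rdiv_lt_0_compat; lra]).
    assert (Hdel0 : del < d0 / 2) by (unfold del; pose proof (Rmin_l (d0/4) (Cmod (rect g a b c d) / (32 * Q))); lra).
    specialize (Bnd del Hdel Hdel0). fold Q in Bnd.
    assert (del <= Cmod (rect g a b c d) / (32 * Q)) by (unfold del; apply Rmin_r).
    assert (16 * del * Q <= Cmod (rect g a b c d) / 2).
    { apply Rle_trans with (16 * (Cmod (rect g a b c d) / (32 * Q)) * Q). nra. right; field; lra. }
    lra. }
  apply Cmod_eq_0; auto.
Qed.

Lemma BdC_inv a b c d z : OnBd (fun w => w <> z) a b c d -> BdC (fun w => / (w - z))%C a b c d.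
Proof.
  intros [H1 H2]. split; intros t Ht; split; apply ccont_inv_shift;
  first [apply (proj1 (H1 t Ht)) | apply (proj2 (H1 t Ht)) | apply (proj1 (H2 t Ht)) | apply (proj2 (H2 t Ht))].
Qed.

Lemma KC_BdC a b c d g : a <= b -> c <= d -> KC g a b c d -> BdC g a b c d.
Proof. apply KC_Bd. Qed.

Theorem cauchy_rect (g : C -> C) a b c d (z : C) : a <= b -> c <= d ->
  (forall x y, a <= x <= b -> c <= y <= d -> exists l, cd g (x, y) l) ->
  a < fst z < b -> c < snd z < d ->
  rect (fun w => g w * / (w - z))%C a b c d = (g z * rect (fun w => / (w - z))%C a b c d)%C.
Proof.
  intros Hab Hcd Hd Hzx Hzy.
  assert (HK : KC g a b c d).
  { intros x y Hx Hy. destruct (Hd x y Hx Hy) as [l Hl]. eapply cd_ccont; eauto. }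
  destruct z as [zx zy]. simpl in Hzx, Hzy.
  destruct (Hd zx zy) as [l0 Hl0]; try lra.
  set (z := (zx, zy) : C).
  set (h := fun w => if Ceq_dec w z then l0 else ((g w - g z) * / (w - z))%C).
  assert (Hnear : forall w, w <> z -> forall w', Cmod (w' - w) < Cmod (w - z) ->
            h w' = ((g w' - g z) * / (w' - z))%C).
  { intros w Hw w' Hw'. unfold h. destruct (Ceq_dec w' z) as [E|E]; auto.
    exfalso. rewrite E in Hw'. rewrite Cmod_sub_sym in Hw'. lra. }
  assert (Hpos : forall w, w <> z -> 0 < Cmod (w - z)).
  { intros w Hw. apply Cmod_gt_0. apply Cminus_eq_contra; auto. }
  assert (Hform_cd : forall w, w <> z -> (exists l, cd g w l) -> exists l, cd h w l).
  { intros w Hw [l Hl].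
    exists ((l - RtoC 0) * / (w - z) + (g w - g z) * - / ((w - z) * (w - z)))%C.
    apply (cd_ext (fun w' => (g w' - g z) * / (w' - z))%C h w _ (Cmod (w - z))); auto.
    - intros w' Hw'. symmetry. apply (Hnear w Hw). auto.
    - apply (cd_mult (fun w' => g w' - g z)%C (fun w' => / (w' - z))%C w (l - RtoC 0)%C
        (- / ((w - z) * (w - z)))%C).
      apply cd_minus; auto. apply cd_const. apply cd_inv_shift; auto. }
  assert (Hcont : forall x y, a <= x <= b -> c <= y <= d -> ccont h (x, y)).
  { intros x y Hx Hy. destruct (Ceq_dec (x, y) z) as [E|E].
    - rewrite E. intros eps Heps. destruct (Hl0 (eps / 2)) as [del [Hdel G]]; [lra|].
      exists del; split; auto. intros w Hw. unfold h at 2.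
      destruct (Ceq_dec z z) as [_|C]; [|congruence].
      unfold h. destruct (Ceq_dec w z) as [E'|E'].
      + replace (l0 - l0)%C with (RtoC 0) by ring. rewrite Cmod_0; lra.
      + specialize (G (w - z)%C Hw). change (zx, zy) with z in G.
        replace (z + (w - z))%C with w in G by ring.
        assert (Hwz : (w - z)%C <> RtoC 0) by (apply Cminus_eq_contra; auto).
        replace ((g w - g z) * / (w - z) - l0)%C with ((g w - g z - l0 * (w - z)) / (w - z))%C
          by (field; auto).
        rewrite Cmod_div by auto.
        assert (0 < Cmod (w - z)) by (apply Cmod_gt_0; auto).
        apply (Rmult_lt_reg_r (Cmod (w - z))); auto.
        unfold Rdiv. rewrite Rmult_assoc, Rinv_l by lra. nra.
    - destruct (Hform_cd (x, y) E) as [l Hl]. apply Hd; auto. eapply cd_ccont; eauto. }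
  assert (Rh : rect h a b c d = RtoC 0).
  { apply (goursat_exc h a b c d z); auto.
    all: intros x y Hx Hy Hne; apply Hform_cd; auto. }
  assert (Bd_ne : OnBd (fun w => w <> z) a b c d).
  { split; intros t Ht; split; intros E; unfold z in E; injection E; intros; lra. }
  assert (Hval : forall w, w <> z -> h w = (g w * / (w - z) - g z * / (w - z))%C).
  { intros w Hw. unfold h. destruct (Ceq_dec w z) as [E|E]; [contradiction|ring]. }
  assert (Eh : rect h a b c d = rect (fun w => (g w * / (w - z)) - g z * / (w - z))%C a b c d).
  { apply rect_ext; auto. destruct Bd_ne as [N1 N2]. split; intros t Ht; split; apply Hval;
    first [apply (proj1 (N1 t Ht)) | apply (proj2 (N1 t Ht)) | apply (proj1 (N2 t Ht)) | apply (proj2 (N2 t Ht))]. }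
  assert (BdCg : BdC g a b c d) by (apply KC_Bd; auto).
  assert (BdCi : BdC (fun w => / (w - z))%C a b c d) by (apply BdC_inv; auto).
  rewrite (rect_minus a b c d Hab Hcd) in Eh.
  2:{ apply BdC_mult; auto. }
  2:{ apply BdC_scal; auto. }
  rewrite (rect_scal a b c d Hab Hcd) in Eh; auto.
  rewrite Rh in Eh. apply (f_equal (fun u => u + g z * rect (fun w => / (w - z)) a b c d)%C) in Eh.
  replace (RtoC 0 + g z * rect (fun w => / (w - z)) a b c d)%C with (g z * rect (fun w => / (w - z)) a b c d)%C in Eh by ring.
  rewrite Eh. ring.
Qed.

Lemma CI_param (psi : C -> R -> C) (psi' : R -> C) z al be K0 eta :
  al <= be -> 0 < eta ->
  (forall h, Cmod h < eta -> CIok (psi (z + h)%C) al be) ->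
  CIok psi' al be ->
  (forall h t, Cmod h < eta -> al <= t <= be ->
     Cmod (psi (z + h)%C t - psi z t - h * psi' t)%C <= K0 * (Cmod h * Cmod h)) ->
  cd (fun z' => CI (psi z') al be) z (CI psi' al be).
Proof.
  intros Hab Heta Hok Hok' Hb.
  assert (Hok0 : CIok (psi z) al be).
  { assert (E := Hok (RtoC 0)). rewrite Cmod_0 in E. replace (z + RtoC 0)%C with z in E by ring. auto. }
  apply (cd_quad _ _ _ (2 * (be - al) * K0) eta); auto.
  intros h Hh.
  rewrite <- CI_minus; auto.
  rewrite Cmult_comm, <- CI_scal; auto.
  rewrite <- CI_minus; auto.
  2:{ apply CIok_minus; auto. }
  2:{ apply CIok_scal; auto. }
  replace (2 * (be - al) * K0 * (Cmod h * Cmod h)) with (2 * (be - al) * (K0 * (Cmod h * Cmod h))) by ring.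
  apply CI_bound; auto.
  all: try (intros t Ht; apply Hb; auto; fail).
  all: try (apply CIok_minus; [apply CIok_minus; auto| apply CIok_scal; auto]).
Qed.

Lemma kern1_bound (A h : C) eta : 0 < eta -> 2 * eta <= Cmod A -> Cmod h < eta ->
  Cmod (/ (A - h) - / A - h * (/ A * / A))%C <= / (eta * eta * eta) * (Cmod h * Cmod h).
Proof.
  intros He HA Hh.
  assert (HA0 : A <> RtoC 0) by (apply Cmod_gt_0; lra).
  assert (HAh : (A - h)%C <> RtoC 0) by (apply Cmod_small_ne; lra).
  pose proof (Cmod_lower A h). pose proof (Cmod_ge_0 h).
  replace (/ (A - h) - / A - h * (/ A * / A))%C with (h * h / (A * A * (A - h)))%C by (field; auto).
  rewrite Cmod_div, !Cmod_mult by (repeat apply Cmult_neq_0; auto).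
  unfold Rdiv. rewrite Rmult_comm. apply Rmult_le_compat_r. nra.
  apply Rinv_le_contravar. apply Rmult_lt_0_compat; nra. apply Rmult_le_compat; nra.
Qed.

Lemma kern2_bound (A h : C) eta : 0 < eta -> 2 * eta <= Cmod A -> Cmod h < eta ->
  Cmod (/ (A - h) * / (A - h) - / A * / A - h * (RtoC 2 * (/ A * / A * / A)))%C
    <= 4 * / (eta * eta * eta * eta) * (Cmod h * Cmod h).
Proof.
  intros He HA Hh.
  assert (HA0 : A <> RtoC 0) by (apply Cmod_gt_0; lra).
  assert (HAh : (A - h)%C <> RtoC 0) by (apply Cmod_small_ne; lra).
  pose proof (Cmod_lower A h). pose proof (Cmod_ge_0 h).
  replace (/ (A - h) * / (A - h) - / A * / A - h * (RtoC 2 * (/ A * / A * / A)))%C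
    with (h * h * (RtoC 3 * A - RtoC 2 * h) / (A * A * A * ((A - h) * (A - h))))%C by (field; auto).
  rewrite Cmod_div, !Cmod_mult by (repeat apply Cmult_neq_0; auto).
  assert (Hn : Cmod (RtoC 3 * A - RtoC 2 * h) <= 4 * Cmod A).
  { eapply Rle_trans. apply Cmod_triangle_sub. rewrite !Cmod_mult, !Cmod_R, !Rabs_right by lra. lra. }
  set (a := Cmod A) in *. set (b := Cmod (A - h)) in *. set (x := Cmod h) in *.
  set (n := Cmod (RtoC 3 * A - RtoC 2 * h)) in *.
  assert (Hb : eta <= b) by lra.
  assert (Hn0 : 0 <= n) by (unfold n; apply Cmod_ge_0).
  unfold Rdiv.
  assert (Ha : 0 < a) by lra. assert (Hb0 : 0 < b) by lra.
  assert (Hpos : 0 < a * a * a * (b * b)) by (repeat apply Rmult_lt_0_compat; auto).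
  apply Rle_trans with (x * x * (4 * a) * / (a * a * a * (b * b))).
  { apply Rmult_le_compat_r. left; apply Rinv_0_lt_compat; auto.
    apply Rmult_le_compat_l; nra. }
  replace (x * x * (4 * a) * / (a * a * a * (b * b))) with (4 * / (a * a * (b * b)) * (x * x)) by (field; nra).
  apply Rmult_le_compat_r; [nra|]. apply Rmult_le_compat_l; [lra|].
  apply Rinv_le_contravar. repeat apply Rmult_lt_0_compat; auto.
  assert (eta * eta <= a * a) by nra. assert (eta * eta <= b * b) by nra.
  replace (eta * eta * eta * eta) with ((eta * eta) * (eta * eta)) by ring.
  apply Rmult_le_compat; nra.
Qed.

Lemma seg_param1 (ga Phi : R -> C) al be z eta M :
  al <= be -> 0 < eta ->
  (forall t, al <= t <= be -> Cmod (Phi t) <= M) ->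
  (forall t, al <= t <= be -> 2 * eta <= Cmod (ga t - z)) ->
  (forall h, Cmod h < eta -> CIok (fun t => Phi t * / (ga t - (z + h)))%C al be) ->
  CIok (fun t => Phi t * (/ (ga t - z) * / (ga t - z)))%C al be ->
  cd (fun z' => CI (fun t => Phi t * / (ga t - z'))%C al be) z
     (CI (fun t => Phi t * (/ (ga t - z) * / (ga t - z)))%C al be).
Proof.
  intros Hab He HM Hd Hok Hok'.
  apply (CI_param (fun z' t => Phi t * / (ga t - z'))%C _ z al be (Rabs M * / (eta * eta * eta)) eta); auto.
  intros h t Hh Ht.
  replace (Phi t * / (ga t - (z + h)) - Phi t * / (ga t - z) - h * (Phi t * (/ (ga t - z) * / (ga t - z))))%C
    with (Phi t * (/ ((ga t - z) - h) - / (ga t - z) - h * (/ (ga t - z) * / (ga t - z))))%C.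
  2:{ replace (ga t - (z + h))%C with ((ga t - z) - h)%C by ring. ring. }
  rewrite Cmod_mult. rewrite Rmult_assoc.
  apply Rmult_le_compat; try apply Cmod_ge_0.
  eapply Rle_trans. apply HM; auto. apply Rle_abs.
  apply kern1_bound; auto.
Qed.

Lemma seg_param2 (ga Phi : R -> C) al be z eta M :
  al <= be -> 0 < eta ->
  (forall t, al <= t <= be -> Cmod (Phi t) <= M) ->
  (forall t, al <= t <= be -> 2 * eta <= Cmod (ga t - z)) ->
  (forall h, Cmod h < eta -> CIok (fun t => Phi t * (/ (ga t - (z + h)) * / (ga t - (z + h))))%C al be) ->
  CIok (fun t => Phi t * (RtoC 2 * (/ (ga t - z) * / (ga t - z) * / (ga t - z))))%C al be ->
  cd (fun z' => CI (fun t => Phi t * (/ (ga t - z') * / (ga t - z')))%C al be) z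
     (CI (fun t => Phi t * (RtoC 2 * (/ (ga t - z) * / (ga t - z) * / (ga t - z))))%C al be).
Proof.
  intros Hab He HM Hd Hok Hok'.
  apply (CI_param (fun z' t => Phi t * (/ (ga t - z') * / (ga t - z')))%C _ z al be
           (Rabs M * (4 * / (eta * eta * eta * eta))) eta); auto.
  intros h t Hh Ht.
  replace (Phi t * (/ (ga t - (z + h)) * / (ga t - (z + h))) - Phi t * (/ (ga t - z) * / (ga t - z))
     - h * (Phi t * (RtoC 2 * (/ (ga t - z) * / (ga t - z) * / (ga t - z)))))%C
    with (Phi t * (/ ((ga t - z) - h) * / ((ga t - z) - h) - / (ga t - z) * / (ga t - z)
          - h * (RtoC 2 * (/ (ga t - z) * / (ga t - z) * / (ga t - z)))))%C.
  2:{ replace (ga t - (z + h))%C with ((ga t - z) - h)%C by ring. ring. }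
  rewrite Cmod_mult. rewrite Rmult_assoc.
  apply Rmult_le_compat; try apply Cmod_ge_0.
  eapply Rle_trans. apply HM; auto. apply Rle_abs.
  apply kern2_bound; auto.
Qed.

Lemma cd_comb4 (F1 F2 F3 F4 : C -> C) z d1 d2 d3 d4 :
  cd F1 z d1 -> cd F2 z d2 -> cd F3 z d3 -> cd F4 z d4 ->
  cd (fun z' => F1 z' + Ci * F2 z' - F3 z' - Ci * F4 z')%C z (d1 + Ci * d2 - d3 - Ci * d4)%C.
Proof.
  intros H1 H2 H3 H4.
  apply (cd_minus (fun z' => F1 z' + Ci * F2 z' - F3 z')%C (fun z' => Ci * F4 z')%C).
  apply (cd_minus (fun z' => F1 z' + Ci * F2 z')%C F3).
  apply (cd_plus F1 (fun z' => Ci * F2 z')%C); auto.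
  apply cd_scal; auto. auto. apply cd_scal; auto.
Qed.

Lemma OnBd_imp (P Q : C -> Prop) a b c d : (forall w, P w -> Q w) -> OnBd P a b c d -> OnBd Q a b c d.
Proof.
  intros H [H1 H2]. split; intros t Ht; split; apply H;
  first [apply (proj1 (H1 t Ht)) | apply (proj2 (H1 t Ht)) | apply (proj1 (H2 t Ht)) | apply (proj2 (H2 t Ht))].
Qed.

Lemma far_ne z eta h w : 0 < eta -> 2 * eta <= Cmod (w - z) -> Cmod h < eta -> w <> (z + h)%C.
Proof.
  intros He Hw Hh E. rewrite E in Hw. replace (z + h - z)%C with h in Hw by ring. lra.
Qed.

Lemma far_ne0 z eta w : 0 < eta -> 2 * eta <= Cmod (w - z) -> w <> z.
Proof.
  intros He Hw E. rewrite E in Hw. replace (z - z)%C with (RtoC 0) in Hw by ring. rewrite Cmod_0 in Hw. lra.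
Qed.

Section RectParam.
Variables (a b c d : R) (g : C -> C) (z : C) (eta M : R).
Hypotheses (Hab : a <= b) (Hcd : c <= d) (He : 0 < eta) (Hg : BdC g a b c d)
  (HM : OnBd (fun w => Cmod (g w) <= M) a b c d)
  (Hfar : OnBd (fun w => 2 * eta <= Cmod (w - z)) a b c d).

Lemma BdC_k1 h : Cmod h < eta -> BdC (fun w => g w * / (w - (z + h)))%C a b c d.
Proof.
  intros Hh. apply BdC_mult; auto. apply BdC_inv.
  apply (OnBd_imp _ _ a b c d (fun w Hw => far_ne z eta h w He Hw Hh) Hfar).
Qed.

Lemma BdC_k2 h : Cmod h < eta -> BdC (fun w => g w * (/ (w - (z + h)) * / (w - (z + h))))%C a b c d.
Proof.
  intros Hh. assert (BI : BdC (fun w => / (w - (z + h)))%C a b c d).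
  { apply BdC_inv. apply (OnBd_imp _ _ a b c d (fun w Hw => far_ne z eta h w He Hw Hh) Hfar). }
  apply BdC_mult; auto. apply BdC_mult; auto.
Qed.

Lemma BdC_k3 : BdC (fun w => g w * (RtoC 2 * (/ (w - z) * / (w - z) * / (w - z))))%C a b c d.
Proof.
  assert (BI : BdC (fun w => / (w - z))%C a b c d).
  { apply BdC_inv. apply (OnBd_imp _ _ a b c d (fun w Hw => far_ne0 z eta w He Hw) Hfar). }
  apply BdC_mult; auto. apply BdC_scal. apply BdC_mult; auto. apply BdC_mult; auto.
Qed.

Lemma BdC_k2' : BdC (fun w => g w * (/ (w - z) * / (w - z)))%C a b c d.
Proof.
  assert (E := BdC_k2 (RtoC 0)). rewrite Cmod_0 in E. specialize (E He).
  replace (z + RtoC 0)%C with z in E by ring. exact E.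
Qed.

Ltac bd_side :=
  match goal with
  | |- forall t, _ -> Cmod _ <= _ => intros t Ht; first [apply (proj1 (proj1 HM t Ht)) | apply (proj2 (proj1 HM t Ht)) | apply (proj1 (proj2 HM t Ht)) | apply (proj2 (proj2 HM t Ht))]
  | |- forall t, _ -> _ <= Cmod _ => intros t Ht; first [apply (proj1 (proj1 Hfar t Ht)) | apply (proj2 (proj1 Hfar t Ht)) | apply (proj1 (proj2 Hfar t Ht)) | apply (proj2 (proj2 Hfar t Ht))]
  end.

Lemma rect_param1 :
  cd (fun z' => rect (fun w => g w * / (w - z'))%C a b c d) z
     (rect (fun w => g w * (/ (w - z) * / (w - z)))%C a b c d).
Proof.
  unfold rect, Hs, Vs. apply cd_comb4.
  - apply (seg_param1 (fun t => (t, c)) (fun t => g (t, c)) a b z eta M); auto; try bd_side.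
    + intros h Hh. apply (CIok_hc a b c d Hab (fun w => g w * / (w - (z + h)))%C). apply BdC_k1; auto.
    + apply (CIok_hc a b c d Hab (fun w => g w * (/ (w - z) * / (w - z)))%C). apply BdC_k2'.
  - apply (seg_param1 (fun t => (b, t)) (fun t => g (b, t)) c d z eta M); auto; try bd_side.
    + intros h Hh. apply (CIok_vb a b c d Hcd (fun w => g w * / (w - (z + h)))%C). apply BdC_k1; auto.
    + apply (CIok_vb a b c d Hcd (fun w => g w * (/ (w - z) * / (w - z)))%C). apply BdC_k2'.
  - apply (seg_param1 (fun t => (t, d)) (fun t => g (t, d)) a b z eta M); auto; try bd_side.
    + intros h Hh. apply (CIok_hd a b c d Hab (fun w => g w * / (w - (z + h)))%C). apply BdC_k1; auto.
    + apply (CIok_hd a b c d Hab (fun w => g w * (/ (w - z) * / (w - z)))%C). apply BdC_k2'.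
  - apply (seg_param1 (fun t => (a, t)) (fun t => g (a, t)) c d z eta M); auto; try bd_side.
    + intros h Hh. apply (CIok_va a b c d Hcd (fun w => g w * / (w - (z + h)))%C). apply BdC_k1; auto.
    + apply (CIok_va a b c d Hcd (fun w => g w * (/ (w - z) * / (w - z)))%C). apply BdC_k2'.
Qed.

Lemma rect_param2 :
  cd (fun z' => rect (fun w => g w * (/ (w - z') * / (w - z')))%C a b c d) z
     (rect (fun w => g w * (RtoC 2 * (/ (w - z) * / (w - z) * / (w - z))))%C a b c d).
Proof.
  unfold rect, Hs, Vs. apply cd_comb4.
  - apply (seg_param2 (fun t => (t, c)) (fun t => g (t, c)) a b z eta M); auto; try bd_side.
    + intros h Hh. apply (CIok_hc a b c d Hab (fun w => g w * (/ (w - (z + h)) * / (w - (z + h))))%C). apply BdC_k2; auto.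
    + apply (CIok_hc a b c d Hab (fun w => g w * (RtoC 2 * (/ (w - z) * / (w - z) * / (w - z))))%C). apply BdC_k3.
  - apply (seg_param2 (fun t => (b, t)) (fun t => g (b, t)) c d z eta M); auto; try bd_side.
    + intros h Hh. apply (CIok_vb a b c d Hcd (fun w => g w * (/ (w - (z + h)) * / (w - (z + h))))%C). apply BdC_k2; auto.
    + apply (CIok_vb a b c d Hcd (fun w => g w * (RtoC 2 * (/ (w - z) * / (w - z) * / (w - z))))%C). apply BdC_k3.
  - apply (seg_param2 (fun t => (t, d)) (fun t => g (t, d)) a b z eta M); auto; try bd_side.
    + intros h Hh. apply (CIok_hd a b c d Hab (fun w => g w * (/ (w - (z + h)) * / (w - (z + h))))%C). apply BdC_k2; auto.
    + apply (CIok_hd a b c d Hab (fun w => g w * (RtoC 2 * (/ (w - z) * / (w - z) * / (w - z))))%C). apply BdC_k3.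
  - apply (seg_param2 (fun t => (a, t)) (fun t => g (a, t)) c d z eta M); auto; try bd_side.
    + intros h Hh. apply (CIok_va a b c d Hcd (fun w => g w * (/ (w - (z + h)) * / (w - (z + h))))%C). apply BdC_k2; auto.
    + apply (CIok_va a b c d Hcd (fun w => g w * (RtoC 2 * (/ (w - z) * / (w - z) * / (w - z))))%C). apply BdC_k3.
Qed.

End RectParam.

Lemma rcont_Cmod_cpt (f : R -> C) t : rcont f t -> continuity_pt (fun s => Cmod (f s)) t.
Proof.
  intros H eps Heps. destruct (H eps Heps) as [d [Hd G]].
  exists d. split; auto. intros x [_ Hx]. simpl in *. unfold R_dist in *.
  apply Rle_lt_trans with (Cmod (f x - f t)); auto.
  pose proof (Cmod_rev_tri (f x) (f t)). pose proof (Cmod_rev_tri (f t) (f x)).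
  rewrite (Cmod_sub_sym (f t)) in H1. unfold Rabs; destruct Rcase_abs; lra.
Qed.

Lemma side_bound (f : R -> C) a b : a <= b -> CIok f a b ->
  exists M, forall t, a <= t <= b -> Cmod (f t) <= M.
Proof.
  intros Hab Hok. destruct (continuity_ab_maj (fun s => Cmod (f s)) a b Hab) as [m [Hm _]].
  { intros x Hx. apply rcont_Cmod_cpt. apply Hok. rewrite Rmin_left, Rmax_right; lra. }
  exists (Cmod (f m)). auto.
Qed.

Lemma BdC_bound g a b c d : a <= b -> c <= d -> BdC g a b c d ->
  exists M, OnBd (fun w => Cmod (g w) <= M) a b c d.
Proof.
  intros Hab Hcd Hg.
  destruct (side_bound (fun t => g (t, c)) a b Hab (CIok_hc a b c d Hab g Hg)) as [M1 H1].
  destruct (side_bound (fun t => g (t, d)) a b Hab (CIok_hd a b c d Hab g Hg)) as [M2 H2].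
  destruct (side_bound (fun t => g (a, t)) c d Hcd (CIok_va a b c d Hcd g Hg)) as [M3 H3].
  destruct (side_bound (fun t => g (b, t)) c d Hcd (CIok_vb a b c d Hcd g Hg)) as [M4 H4].
  exists (Rmax (Rmax M1 M2) (Rmax M3 M4)).
  split; intros t Ht; split.
  - eapply Rle_trans. apply H1; auto. eapply Rle_trans; [apply Rmax_l|apply Rmax_l].
  - eapply Rle_trans. apply H2; auto. eapply Rle_trans; [apply Rmax_r|apply Rmax_l].
  - eapply Rle_trans. apply H3; auto. eapply Rle_trans; [apply Rmax_l|apply Rmax_r].
  - eapply Rle_trans. apply H4; auto. eapply Rle_trans; [apply Rmax_r|apply Rmax_r].
Qed.

Lemma cd_val f z l l' : cd f z l -> l = l' -> cd f z l'.
Proof. intros H E; subst; auto. Qed.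

Lemma CI_zero a b : CI (fun _ => RtoC 0) a b = RtoC 0.
Proof.
  unfold CI. simpl. apply C_ext; simpl; rewrite RInt_const; unfold scal; simpl; unfold mult; simpl; ring.
Qed.

Lemma rcont_const (k : C) t : rcont (fun _ => k) t.
Proof.
  intros eps Heps. exists 1; split; [lra|]. intros s _.
  replace (k - k)%C with (RtoC 0) by ring. rewrite Cmod_0; lra.
Qed.

Lemma RInt_pos_strict (F : R -> R) a b : a < b ->
  (forall t, a <= t <= b -> continuous F t) -> (forall t, a <= t <= b -> 0 < F t) -> 0 < RInt F a b.
Proof. intros Hab Hc Hp. apply RInt_gt_0; auto. intros x Hx; apply Hp; lra. Qed.

Section Local.
Variables (g : C -> C) (x0 y0 s : R).
Hypothesis (Hs0 : 0 < s).
Let a := x0 - s.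
Let b := x0 + s.
Let c := y0 - s.
Let d := y0 + s.
Let z0 : C := (x0, y0).
Hypothesis (Hd : forall x y, a <= x <= b -> c <= y <= d -> exists l, cd g (x, y) l).

Lemma Hab : a <= b. Proof. unfold a, b; lra. Qed.
Lemma Hcd : c <= d. Proof. unfold c, d; lra. Qed.

Lemma ball_interior z : Cmod (z - z0) < s / 2 -> a < fst z < b /\ c < snd z < d.
Proof.
  intros H. pose proof (Cmod_fst (z - z0)%C). pose proof (Cmod_snd (z - z0)%C).
  unfold z0 in *. destruct z as [zx zy]. simpl in *. unfold a, b, c, d.
  unfold Rabs in *; repeat destruct Rcase_abs; lra.
Qed.

Lemma ball_far z : Cmod (z - z0) < s / 2 -> OnBd (fun w => 2 * (s / 4) <= Cmod (w - z)) a b c d.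
Proof.
  intros H. pose proof (Cmod_fst (z - z0)%C). pose proof (Cmod_snd (z - z0)%C).
  unfold z0 in *. destruct z as [zx zy]. simpl in *.
  split; intros t Ht; split.
  all: first [ eapply Rle_trans; [|apply Cmod_snd]; simpl; unfold c, d in *;
               unfold Rabs in *; repeat destruct Rcase_abs; lra
             | eapply Rle_trans; [|apply Cmod_fst]; simpl; unfold a, b in *;
               unfold Rabs in *; repeat destruct Rcase_abs; lra ].
Qed.

Definition Kf (z : C) := rect (fun w => RtoC 1 * / (w - z))%C a b c d.

Lemma BdC_one : BdC (fun _ => RtoC 1) a b c d.
Proof. split; intros; split; apply ccont_const. Qed.

Lemma OnBd_one : OnBd (fun w => Cmod (RtoC 1) <= 1) a b c d.
Proof. rewrite Cmod_1. split; intros; split; lra. Qed.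

Lemma Kf_deriv z : Cmod (z - z0) < s / 2 -> cd Kf z (RtoC 0).
Proof.
  intros Hz.
  assert (Hs4 : 0 < s / 4) by lra.
  assert (P := rect_param1 a b c d (fun _ => RtoC 1) z (s / 4) 1 Hab Hcd Hs4 BdC_one OnBd_one (ball_far z Hz)).
  apply (cd_val _ _ _ _ P).
  apply (rect_prim (fun w => - / (w - z))%C); [apply Hab|apply Hcd|].
  assert (Hne : OnBd (fun w => w <> z) a b c d).
  { apply (OnBd_imp _ _ a b c d (fun w Hw => far_ne0 z (s/4) w Hs4 Hw) (ball_far z Hz)). }
  apply (OnBd_imp (fun w => w <> z)); auto.
  intros w Hw. split.
  - apply (cd_val _ _ _ _ (cd_opp _ _ _ (cd_inv_shift z w Hw))).
    assert ((w - z)%C <> RtoC 0) by (apply Cminus_eq_contra; auto). field; auto.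
  - apply ccont_mult. apply ccont_const. apply ccont_mult; apply ccont_inv_shift; auto.
Qed.

Lemma Kf_const z : Cmod (z - z0) < s / 2 -> Kf z = Kf z0.
Proof.
  intros Hz.
  set (P := fun t : R => (z0 + RtoC t * (z - z0))%C).
  assert (HP : forall t, 0 <= t <= 1 -> Cmod (P t - z0) < s / 2).
  { intros t Ht. unfold P. replace (z0 + RtoC t * (z - z0) - z0)%C with (RtoC t * (z - z0))%C by ring.
    rewrite Cmod_mult, Cmod_R, Rabs_right by lra. pose proof (Cmod_ge_0 (z - z0)). nra. }
  assert (E := CI_FTC (fun t => Kf (P t)) (fun _ => (RtoC 0 * (z - z0))%C) 0 1).
  rewrite (CI_ext _ (fun _ => RtoC 0)) in E by (intros; ring).
  rewrite CI_zero in E.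
  assert (E1 : P 1 = z) by (unfold P; ring).
  assert (E0 : P 0 = z0) by (unfold P; ring).
  rewrite E1, E0 in E.
  assert (Z : (Kf z - Kf z0)%C = RtoC 0).
  { symmetry. apply E.
    - intros t Ht. rewrite Rmin_left, Rmax_right in Ht by lra.
      apply (rderiv_chain Kf P t (RtoC 0) (z - z0)%C).
      apply Kf_deriv. apply HP; auto. apply rderiv_line.
    - intros t _. apply rcont_const. }
  replace (Kf z) with ((Kf z - Kf z0) + Kf z0)%C by ring. rewrite Z. ring.
Qed.

Lemma Cinv_fst (u v : R) : fst (RtoC 1 * / (u, v))%C = u / (u * u + v * v).
Proof. simpl. replace (u * (u * 1) + v * (v * 1)) with (u * u + v * v) by ring. ring. Qed.
Lemma Cinv_snd (u v : R) : snd (RtoC 1 * / (u, v))%C = - v / (u * u + v * v).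
Proof. simpl. replace (u * (u * 1) + v * (v * 1)) with (u * u + v * v) by ring. ring. Qed.

Lemma Kf0_im : 0 < snd (Kf z0).
Proof.
  assert (Hne : OnBd (fun w => w <> z0) a b c d).
  { assert (Hz : Cmod (z0 - z0) < s / 2) by (replace (z0 - z0)%C with (RtoC 0) by ring; rewrite Cmod_0; lra).
    apply (OnBd_imp _ _ a b c d (fun w Hw => far_ne0 z0 (s/4) w ltac:(lra) Hw) (ball_far z0 Hz)). }
  assert (Bk : BdC (fun w => RtoC 1 * / (w - z0))%C a b c d).
  { apply BdC_mult. apply BdC_one. apply BdC_inv; auto. }
  pose proof (CIok_hc a b c d Hab _ Bk) as Ic.
  pose proof (CIok_hd a b c d Hab _ Bk) as Id.
  pose proof (CIok_va a b c d Hcd _ Bk) as Ia.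
  pose proof (CIok_vb a b c d Hcd _ Bk) as Ib.
  assert (Eim : forall X1 X2 X3 X4 : C, snd (X1 + Ci * X2 - X3 - Ci * X4)%C = snd X1 + fst X2 - snd X3 - fst X4)
    by (intros; simpl; ring).
  unfold Kf, rect, Hs, Vs. rewrite Eim. unfold CI. cbn [fst snd].
  assert (Hab' : a < b) by (unfold a, b; lra). assert (Hcd' : c < d) by (unfold c, d; lra).
  assert (T1 : 0 < RInt (fun t => snd (RtoC 1 * / ((t, c) - z0))%C) a b).
  { apply RInt_pos_strict; auto.
    - intros t Ht. apply rcont_snd. apply Ic. rewrite Rmin_left, Rmax_right; lra.
    - intros t Ht. replace ((t, c) - z0)%C with ((t - x0, - s) : C) by (apply C_ext; unfold z0, c; simpl; ring).
      rewrite Cinv_snd. apply Rdiv_lt_0_compat; [lra|(pose proof (Rle_0_sqr (t - x0)); pose proof (Rle_0_sqr (t - y0)); pose proof (Rmult_lt_0_compat s s Hs0 Hs0); unfold Rsqr in *; nra)]. }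
  assert (T2 : 0 < RInt (fun t => fst (RtoC 1 * / ((b, t) - z0))%C) c d).
  { apply RInt_pos_strict; auto.
    - intros t Ht. apply rcont_fst. apply Ib. rewrite Rmin_left, Rmax_right; lra.
    - intros t Ht. replace ((b, t) - z0)%C with ((s, t - y0) : C) by (apply C_ext; unfold z0, b; simpl; ring).
      rewrite Cinv_fst. apply Rdiv_lt_0_compat; [lra|(pose proof (Rle_0_sqr (t - x0)); pose proof (Rle_0_sqr (t - y0)); pose proof (Rmult_lt_0_compat s s Hs0 Hs0); unfold Rsqr in *; nra)]. }
  assert (T3 : 0 < RInt (fun t => -1 * snd (RtoC 1 * / ((t, d) - z0))%C) a b).
  { apply RInt_pos_strict; auto.
    - intros t Ht. apply (continuous_mult (fun _ => -1) (fun t => snd (RtoC 1 * / ((t, d) - z0))%C)).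
      apply continuous_const. apply rcont_snd. apply Id. rewrite Rmin_left, Rmax_right; lra.
    - intros t Ht. replace ((t, d) - z0)%C with ((t - x0, s) : C) by (apply C_ext; unfold z0, d; simpl; ring).
      rewrite Cinv_snd. unfold Rdiv. assert (0 < / ((t - x0) * (t - x0) + s * s)) by (apply Rinv_0_lt_compat; (pose proof (Rle_0_sqr (t - x0)); pose proof (Rle_0_sqr (t - y0)); pose proof (Rmult_lt_0_compat s s Hs0 Hs0); unfold Rsqr in *; nra)). nra. }
  assert (T4 : 0 < RInt (fun t => -1 * fst (RtoC 1 * / ((a, t) - z0))%C) c d).
  { apply RInt_pos_strict; auto.
    - intros t Ht. apply (continuous_mult (fun _ => -1) (fun t => fst (RtoC 1 * / ((a, t) - z0))%C)).
      apply continuous_const. apply rcont_fst. apply Ia. rewrite Rmin_left, Rmax_right; lra.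
    - intros t Ht. replace ((a, t) - z0)%C with ((- s, t - y0) : C) by (apply C_ext; unfold z0, a; simpl; ring).
      rewrite Cinv_fst. unfold Rdiv. assert (0 < / (- s * - s + (t - y0) * (t - y0))) by (apply Rinv_0_lt_compat; (pose proof (Rle_0_sqr (t - x0)); pose proof (Rle_0_sqr (t - y0)); pose proof (Rmult_lt_0_compat s s Hs0 Hs0); unfold Rsqr in *; nra)). nra. }
  rewrite RInt_scal' in T3 by (apply ex_RInt_snd; auto).
  rewrite RInt_scal' in T4 by (apply ex_RInt_fst; auto).
  lra.
Qed.

Lemma K0_ne : Kf z0 <> RtoC 0.
Proof. intros E. pose proof Kf0_im. rewrite E in H. simpl in H. lra. Qed.

Definition Phi1 z := rect (fun w => g w * / (w - z))%C a b c d.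
Definition Phi2 z := rect (fun w => g w * (/ (w - z) * / (w - z)))%C a b c d.

Lemma KCg : KC g a b c d.
Proof. intros x y Hx Hy. destruct (Hd x y Hx Hy) as [l Hl]. eapply cd_ccont; eauto. Qed.

Lemma g_repr z : Cmod (z - z0) < s / 2 -> g z = (/ Kf z0 * Phi1 z)%C.
Proof.
  intros Hz. destruct (ball_interior z Hz) as [Ix Iy].
  assert (E := cauchy_rect g a b c d z Hab Hcd Hd Ix Iy).
  unfold Phi1. rewrite E.
  assert (E2 : rect (fun w => / (w - z))%C a b c d = Kf z).
  { unfold Kf. apply rect_ext; [apply Hab|apply Hcd|]. split; intros; split; ring. }
  rewrite E2, (Kf_const z Hz). pose proof K0_ne. field; auto.
Qed.

Theorem local_deriv : exists g1 : C -> C,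
  (forall z, Cmod (z - z0) < s / 2 -> cd g z (g1 z)) /\
  (forall z, Cmod (z - z0) < s / 2 -> exists l, cd g1 z l).
Proof.
  assert (Bg : BdC g a b c d) by (apply KC_Bd; [apply Hab|apply Hcd|apply KCg]).
  destruct (BdC_bound g a b c d Hab Hcd Bg) as [M HM].
  assert (Hs4 : 0 < s / 4) by lra.
  exists (fun z => / Kf z0 * Phi2 z)%C. split.
  - intros z Hz.
    assert (P := rect_param1 a b c d g z (s / 4) M Hab Hcd Hs4 Bg HM (ball_far z Hz)).
    apply (cd_ext (fun z' => / Kf z0 * Phi1 z')%C g z _ (s / 2 - Cmod (z - z0))); [lra| |].
    + intros w Hw. symmetry. apply g_repr.
      replace (w - z0)%C with ((w - z) + (z - z0))%C by ring.
      eapply Rle_lt_trans. apply Cmod_triangle. lra.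
    + apply cd_scal. exact P.
  - intros z Hz. eexists. apply cd_scal.
    exact (rect_param2 a b c d g z (s / 4) M Hab Hcd Hs4 Bg HM (ball_far z Hz)).
Qed.

End Local.

Definition Hol (V : C -> Prop) (g : C -> C) := forall z, V z -> exists l, cd g z l.
Definition OpenC (V : C -> Prop) := forall z, V z -> exists r, 0 < r /\ forall w, Cmod (w - z) < r -> V w.

Definition dC (g : C -> C) (z : C) : C := epsilon (inhabits (RtoC 0)) (fun l => cd g z l).

Lemma dC_spec V g z : Hol V g -> V z -> cd g z (dC g z).
Proof. intros H Hz. unfold dC. apply epsilon_spec. apply H; auto. Qed.

Theorem hol_dC V g : OpenC V -> Hol V g -> Hol V (dC g).
Proof.
  intros HV Hg z0 Hz0. destruct (HV z0 Hz0) as [r [Hr Hball]].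
  destruct z0 as [x0 y0].
  set (s := r / 3).
  assert (Hs : 0 < s) by (unfold s; lra).
  assert (Hsq : forall x y, x0 - s <= x <= x0 + s -> y0 - s <= y <= y0 + s -> exists l, cd g (x, y) l).
  { intros x y Hx Hy. apply Hg. apply Hball. eapply Rle_lt_trans. apply Cmod_le_sum. simpl.
    unfold s in *. unfold Rabs; repeat destruct Rcase_abs; lra. }
  destruct (local_deriv g x0 y0 s Hs Hsq) as [g1 [G1 G2]].
  destruct (G2 (x0, y0)) as [l Hl].
  { replace ((x0, y0) - (x0, y0))%C with (RtoC 0) by ring. rewrite Cmod_0. lra. }
  exists l. apply (cd_ext g1 (dC g) (x0, y0) l (s / 2)); [lra| |auto].
  intros w Hw. apply (cd_unique g w).
  - apply G1; auto.
  - apply (dC_spec V); auto. apply Hball. apply Rlt_trans with (s / 2); auto. unfold s; lra.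
Qed.

Lemma ball_C_of_Cmod (x y : C) (eps : R) : Cmod (y - x) < eps -> ball x eps y.
Proof. intros H. apply C_NormedModule_mixin_compat1. exact H. Qed.

Lemma open_OpenC (U : C -> Prop) : open U -> OpenC U.
Proof.
  intros HU z Hz. destruct (HU z Hz) as [eps Heps].
  exists eps. split. apply cond_pos. intros w Hw. apply Heps. apply ball_C_of_Cmod. auto.
Qed.

Lemma is_derive_cd (f : C -> C) z l :
  is_derive (K := C_AbsRing) (V := C_NormedModule) f z l -> cd f z l.
Proof.
  intros [_ H] eps Heps.
  assert (Hd := H z (fun P HP => HP) (mkposreal eps Heps)).
  destruct Hd as [del Hdel].
  exists del. split. apply cond_pos. intros h Hh.
  assert (E1 : minus (z + h)%C z = h) by (apply C_ext; simpl; ring).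
  assert (B : ball z del (z + h)%C).
  { unfold ball; simpl. unfold AbsRing_ball.
    replace (@minus (AbsRing.AbelianGroup C_AbsRing) (Cplus z h) z) with h. exact Hh.
    all: try (apply C_ext; simpl; ring). }
  specialize (Hdel _ B). simpl in Hdel.
  replace (@minus (AbsRing_NormedModule C_AbsRing) (Cplus z h) z) with h in Hdel by (apply C_ext; simpl; ring).
  replace (f (z + h)%C - f z - l * h)%C with (minus (minus (f (z + h)%C) (f z)) (scal h l)).
  exact Hdel.
  unfold minus, plus, opp, scal; simpl. unfold mult; simpl. apply C_ext; simpl; ring.
Qed.

Definition cap (n : nat) : nat := match n with 0 => 0 | 1 => 1 | 2 => 2 | _ => 3 end.

Lemma coord_setc x k t j : coord (setc x k t) j = if Nat.eqb (cap j) (cap k) then t else coord x j.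
Proof.
  destruct x as [[[a b] c] d]. destruct k as [|[|[|k]]]; destruct j as [|[|[|j]]]; reflexivity.
Qed.

Lemma setc_coord x k : setc x k (coord x k) = x.
Proof. destruct x as [[[a b] c] d]. destruct k as [|[|[|k]]]; reflexivity. Qed.

Definition Q3 (x : R4) := coord x 1 ^ 2 + coord x 2 ^ 2 + coord x 3 ^ 2.

Lemma vnorm_Q x : vnorm x = sqrt (Q3 x).
Proof. reflexivity. Qed.

Lemma Q3_setc x k t : cap k <> 0%nat -> Q3 (setc x k t) = Q3 x - coord x k ^ 2 + t ^ 2.
Proof.
  intros Hk. destruct x as [[[a b] c] d]. unfold Q3.
  destruct k as [|[|[|k]]]; simpl in *; try congruence; ring.
Qed.

Lemma Q3_setc0 x t : Q3 (setc x 0 t) = Q3 x.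
Proof. destruct x as [[[a b] c] d]. reflexivity. Qed.

Lemma Q3_pos x : vnorm x <> 0 -> 0 < Q3 x.
Proof.
  intros H. unfold vnorm in H. fold (Q3 x) in H.
  assert (0 <= Q3 x) by (unfold Q3; nra).
  destruct (Req_dec (Q3 x) 0) as [E|E]. rewrite E, sqrt_0 in H. congruence. lra.
Qed.

Lemma vnorm_pos x : vnorm x <> 0 -> 0 < vnorm x.
Proof. intros H. pose proof (Q3_pos x H). rewrite vnorm_Q. apply sqrt_lt_R0. auto. Qed.

Lemma vnorm_sq x : vnorm x * vnorm x = Q3 x.
Proof. rewrite vnorm_Q. apply sqrt_sqrt. unfold Q3; nra. Qed.

Lemma dpl_vnorm x k : vnorm x <> 0 ->
  derivable_pt_lim (fun t => vnorm (setc x k t)) (coord x k)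
    (if Nat.eqb (cap k) 0 then 0 else coord x k * / vnorm x).
Proof.
  intros Hx. pose proof (Q3_pos x Hx) as HQ.
  destruct (Nat.eqb_spec (cap k) 0) as [E|E].
  - assert (Ek : k = 0%nat) by (destruct k as [|[|[|k]]]; simpl in E; congruence). subst.
    apply (derivable_pt_lim_ext (fun _ => vnorm x)).
    { intros t. rewrite !vnorm_Q, Q3_setc0. reflexivity. }
    apply derivable_pt_lim_const.
  - apply is_derive_Reals.
    apply (is_derive_ext (fun t => sqrt (Q3 x - coord x k ^ 2 + t ^ 2))).
    { intros t. rewrite vnorm_Q, Q3_setc; auto. }
    replace (coord x k * / vnorm x) with ((2 * coord x k ^ 1 * 1) / (2 * sqrt (Q3 x - coord x k ^ 2 + coord x k ^ 2))).
    2:{ replace (Q3 x - coord x k ^ 2 + coord x k ^ 2) with (Q3 x) by ring. rewrite <- vnorm_Q.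
        pose proof (vnorm_pos x Hx). field. lra. }
    apply (is_derive_sqrt (fun t => Q3 x - coord x k ^ 2 + t ^ 2)).
    + auto_derive; auto. ring.
    + replace (Q3 x - coord x k ^ 2 + coord x k ^ 2) with (Q3 x) by ring. auto.
Qed.

Lemma dpl_coord x k j :
  derivable_pt_lim (fun t => coord (setc x k t) j) (coord x k)
    (if Nat.eqb (cap j) (cap k) then 1 else 0).
Proof.
  destruct (Nat.eqb (cap j) (cap k)) eqn:E.
  - apply (derivable_pt_lim_ext (fun t => t)). intros t. rewrite coord_setc, E. auto.
    apply derivable_pt_lim_id.
  - apply (derivable_pt_lim_ext (fun _ => coord x j)). intros t. rewrite coord_setc, E. auto.
    apply derivable_pt_lim_const.
Qed.

Inductive ex : Type :=
| Cz (z : Z) | Xv (k : nat) | Rr | Ri | Au (n : nat) | Bv (n : nat)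
| Add (e1 e2 : ex) | Mul (e1 e2 : ex).

Definition pt (x : R4) : C := (coord x 0, vnorm x).

Fixpoint eval (F : nat -> C -> C) (e : ex) (x : R4) : R :=
  match e with
  | Cz z => IZR z
  | Xv k => coord x k
  | Rr => vnorm x
  | Ri => / vnorm x
  | Au n => fst (F n (pt x))
  | Bv n => snd (F n (pt x))
  | Add e1 e2 => eval F e1 x + eval F e2 x
  | Mul e1 e2 => eval F e1 x * eval F e2 x
  end.

Definition mkAdd (e1 e2 : ex) : ex :=
  match e1, e2 with
  | Cz Z0, _ => e2
  | _, Cz Z0 => e1
  | Cz a, Cz b => Cz (a + b)
  | _, _ => Add e1 e2
  end.

Definition mkMul (e1 e2 : ex) : ex :=
  match e1, e2 with
  | Cz Z0, _ => Cz 0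
  | _, Cz Z0 => Cz 0
  | Cz (Zpos xH), _ => e2
  | _, Cz (Zpos xH) => e1
  | Cz a, Cz b => Cz (a * b)
  | _, _ => Mul e1 e2
  end.

Lemma eval_mkAdd F e1 e2 x : eval F (mkAdd e1 e2) x = eval F e1 x + eval F e2 x.
Proof.
  assert (G : forall a b : Z, IZR (a + b) = IZR a + IZR b) by (intros; apply plus_IZR).
  destruct e1 as [a| | | | | | |]; destruct e2 as [b| | | | | | |];
  try (destruct a); try (destruct b);
  unfold mkAdd; cbn [eval]; try ring;
  match goal with |- IZR (?u + ?v) = _ => rewrite (G u v); ring end.
Qed.

Lemma eval_mkMul F e1 e2 x : eval F (mkMul e1 e2) x = eval F e1 x * eval F e2 x.
Proof.
  assert (G : forall a b : Z, IZR (a * b) = IZR a * IZR b) by (intros; apply mult_IZR).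
  destruct e1 as [a| | | | | | |]; destruct e2 as [b| | | | | | |];
  try (destruct a as [|p|p]; try destruct p); try (destruct b as [|q|q]; try destruct q);
  unfold mkMul; cbn [eval]; try ring;
  match goal with |- IZR (?u * ?v) = _ => rewrite (G u v); ring end.
Qed.

Definition isz (k : nat) : bool := Nat.eqb (cap k) 0.

Fixpoint dk (k : nat) (e : ex) : ex :=
  match e with
  | Cz _ => Cz 0
  | Xv j => if Nat.eqb (cap j) (cap k) then Cz 1 else Cz 0
  | Rr => if isz k then Cz 0 else mkMul (Xv k) Ri
  | Ri => if isz k then Cz 0 else mkMul (Cz (-1)) (mkMul (Xv k) (mkMul Ri (mkMul Ri Ri)))
  | Au n => if isz k then Au (S n) else mkMul (Cz (-1)) (mkMul (Bv (S n)) (mkMul (Xv k) Ri))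
  | Bv n => if isz k then Bv (S n) else mkMul (Au (S n)) (mkMul (Xv k) Ri)
  | Add e1 e2 => mkAdd (dk k e1) (dk k e2)
  | Mul e1 e2 => mkAdd (mkMul (dk k e1) e2) (mkMul e1 (dk k e2))
  end.

Section Deriv.
Variables (F : nat -> C -> C) (U : C -> Prop).
Hypothesis HF : forall n w, U w -> cd (F n) w (F (S n) w).

Definition Om (x : R4) : Prop := vnorm x <> 0 /\ U (pt x).

Lemma rderiv_pt x k : vnorm x <> 0 ->
  rderiv (fun t => pt (setc x k t)) (coord x k)
    (if isz k then RtoC 1 else (0, coord x k * / vnorm x)).
Proof.
  intros Hx. apply rderiv_of_comp; unfold pt; simpl.
  - assert (H := dpl_coord x k 0). unfold isz. simpl in H |- *.
    destruct (cap k) as [|m] eqn:E; simpl in *; auto.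
  - assert (H := dpl_vnorm x k Hx). unfold isz. destruct (Nat.eqb (cap k) 0); simpl; auto.
Qed.

Lemma dk_correct e x k : Om x ->
  derivable_pt_lim (fun t => eval F e (setc x k t)) (coord x k) (eval F (dk k e) x).
Proof.
  intros [Hx HU]. induction e; simpl.
  - apply derivable_pt_lim_const.
  - assert (H := dpl_coord x k k0). destruct (Nat.eqb (cap k0) (cap k)); simpl; auto.
  - assert (H := dpl_vnorm x k Hx). unfold isz. destruct (Nat.eqb (cap k) 0); simpl; auto.
  - assert (H := dpl_vnorm x k Hx). assert (Hp := vnorm_pos x Hx).
    apply is_derive_Reals. apply is_derive_Reals in H.
    assert (Hi := is_derive_inv (fun t => vnorm (setc x k t)) (coord x k) _ H).
    cbv beta in Hi. rewrite setc_coord in Hi. specialize (Hi Hx).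
    unfold isz. destruct (Nat.eqb (cap k) 0); simpl.
    + replace (IZR 0) with (- 0 / vnorm x ^ 2) by (simpl; field; lra). auto.
    + simpl.
      replace (-1 * (coord x k * (/ vnorm x * (/ vnorm x * / vnorm x))))
        with (- (coord x k * / vnorm x) / vnorm x ^ 2) by (field; lra). auto.
  - assert (Hc := HF n (pt x) HU).
    assert (Hr := rderiv_chain (F n) (fun t => pt (setc x k t)) (coord x k) _ _
                  ltac:(cbv beta; rewrite setc_coord; exact Hc) (rderiv_pt x k Hx)).
    apply rderiv_fst in Hr. simpl in Hr.
    unfold isz in *. destruct (Nat.eqb (cap k) 0); simpl in *.
    + replace (fst (F (S n) (pt x))) with (fst (F (S n) (pt x)) * 1 - snd (F (S n) (pt x)) * 0) by ring. auto.
    + simpl.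
      replace (-1 * (snd (F (S n) (pt x)) * (coord x k * / vnorm x)))
        with (fst (F (S n) (pt x)) * 0 - snd (F (S n) (pt x)) * (coord x k * / vnorm x)) by ring. auto.
  - assert (Hc := HF n (pt x) HU).
    assert (Hr := rderiv_chain (F n) (fun t => pt (setc x k t)) (coord x k) _ _
                  ltac:(cbv beta; rewrite setc_coord; exact Hc) (rderiv_pt x k Hx)).
    apply rderiv_snd in Hr. simpl in Hr.
    unfold isz in *. destruct (Nat.eqb (cap k) 0); simpl in *.
    + replace (snd (F (S n) (pt x))) with (fst (F (S n) (pt x)) * 0 + snd (F (S n) (pt x)) * 1) by ring. auto.
    + simpl.
      replace (fst (F (S n) (pt x)) * (coord x k * / vnorm x))
        with (fst (F (S n) (pt x)) * (coord x k * / vnorm x) + snd (F (S n) (pt x)) * 0) by ring. auto.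
  - rewrite eval_mkAdd. apply derivable_pt_lim_plus; auto.
  - rewrite eval_mkAdd, !eval_mkMul.
    assert (M := derivable_pt_lim_mult _ _ _ _ _ IHe1 IHe2). cbv beta in M.
    rewrite !setc_coord in M. exact M.
Qed.

End Deriv.

Definition near4 (x : R4) (del : R) (y : R4) : Prop := forall j, Rabs (coord y j - coord x j) < del.
Definition cont4 (G : R4 -> R) (x : R4) : Prop :=
  forall eps, 0 < eps -> exists del, 0 < del /\ forall y, near4 x del y -> Rabs (G y - G x) < eps.

Lemma near4_mono x d1 d2 y : d1 <= d2 -> near4 x d1 y -> near4 x d2 y.
Proof. intros H N j. specialize (N j). lra. Qed.

Lemma near4_refl x d : 0 < d -> near4 x d x.
Proof. intros H j. unfold Rminus. rewrite Rplus_opp_r, Rabs_R0. auto. Qed.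

Lemma cont4_plus G H x : cont4 G x -> cont4 H x -> cont4 (fun y => G y + H y) x.
Proof.
  intros CG CH eps Heps.
  destruct (CG (eps/2)) as [d1 [Hd1 G1]]; [lra|]. destruct (CH (eps/2)) as [d2 [Hd2 G2]]; [lra|].
  exists (Rmin d1 d2). split. apply Rmin_glb_lt; auto.
  intros y Hy. specialize (G1 y (near4_mono _ _ _ _ (Rmin_l d1 d2) Hy)).
  specialize (G2 y (near4_mono _ _ _ _ (Rmin_r d1 d2) Hy)).
  replace (G y + H y - (G x + H x)) with ((G y - G x) + (H y - H x)) by ring.
  eapply Rle_lt_trans. apply Rabs_triang. lra.
Qed.

Lemma cont4_comp_pt (G : R4 -> R) (phi : R -> R) x : cont4 G x -> continuity_pt phi (G x) ->
  cont4 (fun y => phi (G y)) x.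
Proof.
  intros CG Cp eps Heps. destruct (Cp eps Heps) as [d1 [Hd1 P1]].
  destruct (CG d1 Hd1) as [d2 [Hd2 G2]]. exists d2. split; auto.
  intros y Hy. destruct (Req_dec (G y) (G x)) as [E|E].
  - rewrite E. unfold Rminus. rewrite Rplus_opp_r, Rabs_R0. auto.
  - apply (P1 (G y)). split; [split; [exact I| intro Ee; apply E; auto] | simpl; unfold R_dist; auto].
Qed.

Lemma cont4_mult G H x : cont4 G x -> cont4 H x -> cont4 (fun y => G y * H y) x.
Proof.
  intros CG CH eps Heps.
  set (A := Rabs (G x) + 1). set (B := Rabs (H x) + 1).
  assert (HA : 0 < A) by (unfold A; pose proof (Rabs_pos (G x)); lra).
  assert (HB : 0 < B) by (unfold B; pose proof (Rabs_pos (H x)); lra).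
  destruct (CG (Rmin 1 (eps / (3 * B)))) as [d1 [Hd1 G1]].
  { apply Rmin_glb_lt; [lra|]. apply Rdiv_lt_0_compat; lra. }
  destruct (CH (eps / (3 * A))) as [d2 [Hd2 G2]]. { apply Rdiv_lt_0_compat; lra. }
  exists (Rmin d1 d2). split. apply Rmin_glb_lt; auto.
  intros y Hy. specialize (G1 y (near4_mono _ _ _ _ (Rmin_l d1 d2) Hy)).
  specialize (G2 y (near4_mono _ _ _ _ (Rmin_r d1 d2) Hy)).
  assert (G1a : Rabs (G y - G x) < 1) by (eapply Rlt_le_trans; [exact G1|apply Rmin_l]).
  assert (G1b : Rabs (G y - G x) < eps / (3 * B)) by (eapply Rlt_le_trans; [exact G1|apply Rmin_r]).
  assert (HGy : Rabs (G y) <= A).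
  { replace (G y) with ((G y - G x) + G x) by ring. eapply Rle_trans. apply Rabs_triang. unfold A; lra. }
  replace (G y * H y - G x * H x) with (G y * (H y - H x) + (G y - G x) * H x) by ring.
  eapply Rle_lt_trans. apply Rabs_triang. rewrite !Rabs_mult.
  assert (T1 : Rabs (G y) * Rabs (H y - H x) <= A * (eps / (3 * A))).
  { apply Rmult_le_compat; try apply Rabs_pos; lra. }
  assert (T2 : Rabs (G y - G x) * Rabs (H x) <= eps / (3 * B) * B).
  { apply Rmult_le_compat; try apply Rabs_pos; try lra. unfold B; lra. }
  assert (A * (eps / (3 * A)) = eps / 3) by (field; lra).
  assert (eps / (3 * B) * B = eps / 3) by (field; lra).
  lra.
Qed.

Lemma cont4_coord j x : cont4 (fun y => coord y j) x.
Proof. intros eps Heps. exists eps. split; auto. Qed.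

Lemma cont4_const c x : cont4 (fun _ => c) x.
Proof.
  intros eps Heps. exists 1. split; [lra|]. intros y _. unfold Rminus. rewrite Rplus_opp_r, Rabs_R0; auto.
Qed.

Lemma cont4_Q3 x : cont4 Q3 x.
Proof.
  unfold Q3. simpl.
  apply cont4_plus. apply cont4_plus.
  all: apply cont4_mult; [apply cont4_coord|]; apply cont4_mult; [apply cont4_coord| apply cont4_const].
Qed.

Lemma cont4_vnorm x : cont4 vnorm x.
Proof.
  apply (cont4_comp_pt Q3 sqrt x (cont4_Q3 x)). apply continuity_pt_sqrt. unfold Q3; nra.
Qed.

Lemma cont4_inv_vnorm x : vnorm x <> 0 -> cont4 (fun y => / vnorm y) x.
Proof.
  intros H. apply (cont4_comp_pt vnorm (fun r => / r) x (cont4_vnorm x)).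
  apply (continuity_pt_inv (fun r => r)). apply continuity_pt_id. auto.
Qed.

Lemma cont4_ccont (G : C -> C) x : ccont G (pt x) ->
  cont4 (fun y => fst (G (pt y))) x /\ cont4 (fun y => snd (G (pt y))) x.
Proof.
  intros CG. split; intros eps Heps; destruct (CG eps Heps) as [d1 [Hd1 G1]];
  destruct (cont4_vnorm x (d1/2)) as [d2 [Hd2 V2]]; try lra;
  exists (Rmin (d1/2) d2); (split; [apply Rmin_glb_lt; lra|]); intros y Hy;
  assert (Hc : Cmod (pt y - pt x) < d1) by (
    eapply Rle_lt_trans; [apply Cmod_le_sum|]; unfold pt; simpl;
    specialize (V2 y (near4_mono _ _ _ _ (Rmin_r _ _) Hy));
    specialize (Hy 0%nat); assert (Rabs (coord y 0 - coord x 0) < d1/2) by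
      (eapply Rlt_le_trans; [exact Hy|apply Rmin_l]);
    unfold Rminus in *; lra);
  specialize (G1 _ Hc).
  - eapply Rle_lt_trans; [|exact G1]. eapply Rle_trans; [|apply Cmod_fst]. simpl. right. f_equal.
  - eapply Rle_lt_trans; [|exact G1]. eapply Rle_trans; [|apply Cmod_snd]. simpl. right. f_equal.
Qed.

Lemma ball4_near (x y : R4) (d : R) : ball x d y -> near4 x d y.
Proof.
  destruct x as [[[a b] c] e]. destruct y as [[[a' b'] c'] e'].
  intros [[[H1 H2] H3] H4]. intros j.
  destruct j as [|[|[|j]]]; simpl; assumption.
Qed.

Lemma cont4_continuous G x : cont4 G x -> continuous G x.
Proof.
  intros CG. apply filterlim_locally. intros eps.
  destruct (CG eps (cond_pos eps)) as [d [Hd Gd]].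
  exists (mkposreal d Hd). intros y Hy. apply Gd. apply ball4_near. exact Hy.
Qed.

Section Smooth.
Variables (F : nat -> C -> C) (U : C -> Prop).
Hypothesis HF : forall n w, U w -> cd (F n) w (F (S n) w).
Hypothesis HU : OpenC U.

Lemma Om_open x : Om U x -> exists d, 0 < d /\ forall y, near4 x d y -> Om U y.
Proof.
  intros [Hx Hu]. destruct (HU _ Hu) as [r [Hr Hball]].
  pose proof (vnorm_pos x Hx) as Hp.
  destruct (cont4_vnorm x (Rmin (vnorm x) (r / 2))) as [d [Hd V]].
  { apply Rmin_glb_lt; lra. }
  exists (Rmin d (r / 2)). split. apply Rmin_glb_lt; lra.
  intros y Hy. specialize (V y (near4_mono _ _ _ _ (Rmin_l _ _) Hy)).
  assert (V1 : Rabs (vnorm y - vnorm x) < vnorm x) by (eapply Rlt_le_trans; [exact V|apply Rmin_l]).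
  assert (V2 : Rabs (vnorm y - vnorm x) < r / 2) by (eapply Rlt_le_trans; [exact V|apply Rmin_r]).
  split.
  - intros E. rewrite E in V1. unfold Rabs in V1; destruct Rcase_abs; lra.
  - apply Hball. eapply Rle_lt_trans. apply Cmod_le_sum. unfold pt; simpl.
    specialize (Hy 0%nat). assert (Rabs (coord y 0 - coord x 0) < r / 2) by
      (eapply Rlt_le_trans; [exact Hy|apply Rmin_r]).
    unfold Rminus in *. lra.
Qed.

Lemma eval_cont e x : Om U x -> cont4 (eval F e) x.
Proof.
  intros Hx. destruct Hx as [Hv Hu] eqn:Hom. induction e; simpl.
  - apply cont4_const.
  - apply cont4_coord.
  - apply cont4_vnorm.
  - apply cont4_inv_vnorm; auto.
  - apply (cont4_ccont (F n) x). eapply cd_ccont. apply HF; auto.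
  - apply (cont4_ccont (F n) x). eapply cd_ccont. apply HF; auto.
  - apply cont4_plus; auto.
  - apply cont4_mult; auto.
Qed.

Lemma near4_setc x k t d : Rabs (t - coord x k) < d -> near4 x d (setc x k t).
Proof.
  intros H j. rewrite coord_setc. destruct (Nat.eqb (cap j) (cap k)) eqn:E.
  - assert (coord x j = coord x k).
    { destruct x as [[[a b] c] e]. destruct j as [|[|[|j]]]; destruct k as [|[|[|k]]]; simpl in E; try discriminate; reflexivity. }
    rewrite H0. auto.
  - unfold Rminus. rewrite Rplus_opp_r, Rabs_R0. pose proof (Rabs_pos (t - coord x k)). lra.
Qed.

Lemma loc_line x k : Om U x -> locally (coord x k) (fun t => Om U (setc x k t)).
Proof.
  intros Hx. destruct (Om_open x Hx) as [d [Hd Hn]].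
  exists (mkposreal d Hd). intros t Ht. apply Hn. apply near4_setc. exact Ht.
Qed.

Lemma loc_pt x : Om U x -> locally x (fun y => Om U y).
Proof.
  intros Hx. destruct (Om_open x Hx) as [d [Hd Hn]].
  exists (mkposreal d Hd). intros y Hy. apply Hn. apply ball4_near. exact Hy.
Qed.

Lemma PD (g : R4 -> R) e : (forall y, Om U y -> g y = eval F e y) ->
  forall k y, Om U y -> pd k g y = eval F (dk k e) y.
Proof.
  intros Hg k y Hy. unfold pd.
  rewrite (Derive_ext_loc _ (fun t => eval F e (setc y k t))).
  - apply is_derive_unique. apply is_derive_Reals. apply dk_correct with (U := U); auto.
  - destruct (loc_line y k Hy) as [d Hd]. exists d. intros t Ht. apply Hg. apply Hd; auto.
Qed.

Definition dks (ks : list nat) (e : ex) : ex := fold_right dk e ks.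

Lemma iter_eval (g : R4 -> R) e : (forall y, Om U y -> g y = eval F e y) ->
  forall ks y, Om U y -> iter_pd ks g y = eval F (dks ks e) y.
Proof.
  intros Hg ks. induction ks as [|k ks IH]; intros y Hy.
  - simpl. auto.
  - simpl. apply (PD (iter_pd ks g) (dks ks e)); auto.
Qed.

Lemma smooth_eval (g : R4 -> R) e : (forall y, Om U y -> g y = eval F e y) -> smooth_on (Om U) g.
Proof.
  intros Hg ks x Hx. split.
  - apply (continuous_ext_loc _ (eval F (dks ks e))).
    + destruct (loc_pt x Hx) as [d Hd]. exists d. intros y Hy. symmetry. apply iter_eval; auto.
    + apply cont4_continuous. apply eval_cont; auto.
  - intros k _. apply (ex_derive_ext_loc (fun t => eval F (dks ks e) (setc x k t))).
    + destruct (loc_line x k Hx) as [d Hd]. exists d. intros t Ht. symmetry. apply iter_eval; auto.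
    + exists (eval F (dk k (dks ks e)) x). apply is_derive_Reals. apply dk_correct with (U := U); auto.
Qed.

End Smooth.

Definition Fe (c1 c2 c3 : bool) : ex :=
  match c1, c2, c3 with
  | false, false, false => Au 0
  | true, false, false => Mul (Mul (Xv 1) Ri) (Bv 0)
  | false, true, false => Mul (Mul (Xv 2) Ri) (Bv 0)
  | false, false, true => Mul (Mul (Xv 3) Ri) (Bv 0)
  | _, _, _ => Cz 0
  end.

Definition LapE (c1 c2 c3 : bool) : ex :=
  let e := Fe c1 c2 c3 in
  mkAdd (dk 0 (dk 0 e)) (mkAdd (dk 1 (dk 1 e)) (mkAdd (dk 2 (dk 2 e)) (dk 3 (dk 3 e)))).

Definition FX (f : C -> C) (x : R4) : Cl :=
  para (fst (f (coord x 0, vnorm x)))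
       (coord x 1 / vnorm x * snd (f (coord x 0, vnorm x)))
       (coord x 2 / vnorm x * snd (f (coord x 0, vnorm x)))
       (coord x 3 / vnorm x * snd (f (coord x 0, vnorm x))).

Definition Fn (f : C -> C) (n : nat) : C -> C := Nat.iter n dC f.

Lemma FX_eval f x c1 c2 c3 : FX f x c1 c2 c3 = eval (Fn f) (Fe c1 c2 c3) x.
Proof.
  destruct c1, c2, c3; unfold FX, para, Fe; cbn [eval]; unfold Fn, pt; simpl; try reflexivity;
  unfold Rdiv; ring.
Qed.

Ltac norm_evals :=
  repeat match goal with
  | |- context [eval ?F (dk ?k (LapE ?a ?b ?c)) ?x] =>
      let T := constr:(dk k (LapE a b c)) in
      let v := eval vm_compute in T in
      replace T with v by (vm_compute; reflexivity)
  end.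

Lemma mul_gen0 (v : Cl) c1 c2 c3 : cl_mul (gen 0) v c1 c2 c3 = v c1 c2 c3.
Proof. destruct c1, c2, c3; unfold cl_mul, gen, blade, sumb, blade_sign; simpl; ring. Qed.
Lemma mul_gen1 (v : Cl) c1 c2 c3 :
  cl_mul (gen 1) v c1 c2 c3 = blade_sign true false false (negb c1) c2 c3 * v (negb c1) c2 c3.
Proof. destruct c1, c2, c3; unfold cl_mul, gen, blade, sumb, blade_sign; simpl; ring. Qed.
Lemma mul_gen2 (v : Cl) c1 c2 c3 :
  cl_mul (gen 2) v c1 c2 c3 = blade_sign false true false c1 (negb c2) c3 * v c1 (negb c2) c3.
Proof. destruct c1, c2, c3; unfold cl_mul, gen, blade, sumb, blade_sign; simpl; ring. Qed.
Lemma mul_gen3 (v : Cl) c1 c2 c3 :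
  cl_mul (gen 3) v c1 c2 c3 = blade_sign false false true c1 c2 (negb c3) * v c1 c2 (negb c3).
Proof. destruct c1, c2, c3; unfold cl_mul, gen, blade, sumb, blade_sign; simpl; ring. Qed.

Theorem main_lemma (U : C -> Prop) (f : C -> C) :
  open U -> holomorphic_on U f ->
  holomorphic_cliffordian (fun x => vnorm x <> 0 /\ U (coord x 0, vnorm x)) (FX f).
Proof.
  intros HU Hf.
  assert (HUo : OpenC U) by (apply open_OpenC; auto).
  assert (Hh : Hol U f).
  { intros z Hz. destruct (Hf z Hz) as [l Hl]. exists l. apply is_derive_cd. exact Hl. }
  assert (HolN : forall n, Hol U (Fn f n)).
  { induction n. exact Hh. simpl. apply hol_dC; auto. }
  assert (HF : forall n w, U w -> cd (Fn f n) w (Fn f (S n) w)).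
  { intros n w Hw. simpl. apply (dC_spec U); auto. }
  assert (Hcomp : forall c1 c2 c3 y, Om U y -> (fun y => FX f y c1 c2 c3) y = eval (Fn f) (Fe c1 c2 c3) y).
  { intros. apply FX_eval. }
  split.
  - intros c1 c2 c3. apply (smooth_eval (Fn f) U HF HUo (fun y => FX f y c1 c2 c3) (Fe c1 c2 c3)).
    intros y _. apply FX_eval.
  - intros x Hx. change (Om U x) in Hx.
    assert (LapOK : forall y, Om U y -> forall c1 c2 c3,
               Lap (FX f) y c1 c2 c3 = eval (Fn f) (LapE c1 c2 c3) y).
    { intros y Hy c1 c2 c3. unfold Lap, cl_add, pdC, LapE. rewrite !eval_mkAdd.
      assert (P1 := PD (Fn f) U HF HUo (fun y => FX f y c1 c2 c3) (Fe c1 c2 c3) (Hcomp c1 c2 c3)).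
      assert (P2 : forall k, forall y, Om U y ->
                pd k (fun y0 => pd k (fun y1 => FX f y1 c1 c2 c3) y0) y = eval (Fn f) (dk k (dk k (Fe c1 c2 c3))) y).
      { intros k. apply (PD (Fn f) U HF HUo). intros y0 Hy0. apply P1; auto. }
      rewrite !P2; auto. }
    assert (HD : forall k, pdC k (Lap (FX f)) x = fun a1 a2 a3 => eval (Fn f) (dk k (LapE a1 a2 a3)) x).
    { intros k. extensionality a1. extensionality a2. extensionality a3. unfold pdC.
      apply (PD (Fn f) U HF HUo (fun y => Lap (FX f) y a1 a2 a3) (LapE a1 a2 a3)); auto.
      all: intros y Hy; apply LapOK; auto. }
    assert (Hx1 : coord x 1 ^ 2 = vnorm x ^ 2 - coord x 2 ^ 2 - coord x 3 ^ 2).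
    { pose proof (vnorm_sq x) as Hq. unfold Q3 in Hq. nra. }
    assert (Hv : vnorm x <> 0) by (destruct Hx; auto).
    unfold Dop. rewrite !HD.
    extensionality c1. extensionality c2. extensionality c3.
    unfold cl_zero, cl_add. rewrite mul_gen0, mul_gen1, mul_gen2, mul_gen3. cbv beta.
    destruct c1, c2, c3; unfold blade_sign; cbn [negb nb Nat.mul Nat.add pow].
    all: norm_evals.
    all: cbn [eval].
    all: try (ring; fail).
    ring_simplify. replace (coord x 1 ^ 4) with ((coord x 1 ^ 2) ^ 2) by ring.
    rewrite Hx1. field. auto.
Qed.

Theorem lemma2 (U : C -> Prop) (f : C -> C) :
  open U -> holomorphic_on U f ->
  let u := fun xi eta : R => fst (f (xi, eta)) in
  let v := fun xi eta : R => snd (f (xi, eta)) in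
  holomorphic_cliffordian
    (fun x => vnorm x <> 0 /\ U (coord x 0, vnorm x))
    (fun x => para (u (coord x 0) (vnorm x))
                   (coord x 1 / vnorm x * v (coord x 0) (vnorm x))
                   (coord x 2 / vnorm x * v (coord x 0) (vnorm x))
                   (coord x 3 / vnorm x * v (coord x 0) (vnorm x))).
Proof.
  intros HU Hf u v. exact (main_lemma U f HU Hf).
Qed.
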